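(* Let $d\ge 1$, let $x_1<x_2$ be real numbers and $x_0\in[x_1,x_2]$. Let $p,q,r_1,\dots,r_d$ be continuous complex-valued functions on $[x_1,x_2]$, with $p$ continuously differentiable and $p(x)\neq 0$ for all $x$, and let $Ly=(py')'+qy$. Let $u_0$ be a nonvanishing solution of $Lu_0=0$ on $[x_1,x_2]$, and let $\tilde X^{(\mathbf j)}$, $X^{(\mathbf m+\frac1d\mathbf 1)}$ be the formal powers defined in the context. For $\vec\lambda=(\lambda_1,\dots,\lambda_d)\in\mathbb C^d$ define $$u_1=u_0\sum_{\mathbf n\in\mathbb Z_{\ge0}^d}\frac{1}{(2|\mathbf n|)!}\tilde X^{(2\mathbf n)}\lambda^{\mathbf n},\qquad u_2=u_0\sum_{\mathbf n\in\mathbb Z_{\ge0}^d}\frac{1}{(2|\mathbf n|+1)!}X^{(2\mathbf n+\frac1d\mathbf 1)}\lambda^{\mathbf n}.$$ Then for every $\vec\lambda\in\mathbb C^d$ both series converge uniformly on $[x_1,x_2]$, and $u_1,u_2$ are linearly independent solutions of $$(py')'+qy=(\lambda_1r_1+\cdots+\lambda_dr_d)\,y .$$ Moreover their derivatives are given by the uniformly convergent series $$u_1'=\frac{u_0'}{u_0}u_1+\frac{1}{pu_0}\sum_{\mathbf n\in\mathbb Z_{\ge0}^d,\ \mathbf n\neq 0}\frac{1}{(2|\mathbf n|-1)!}\sum_{i=1}^d\tilde X^{(2\mathbf n-\delta_i)}\lambda^{\mathbf n},$$ $$u_2'=\frac{u_0'}{u_0}u_2+\frac{1}{pu_0}\sum_{\mathbf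 n\in\mathbb Z_{\ge0}^d}\frac{1}{(2|\mathbf n|)!}\sum_{i=1}^dX^{(2\mathbf n-\delta_i+\frac1d\mathbf 1)}\lambda^{\mathbf n},$$ and for every $\vec\lambda$ the initial values are $u_1(x_0)=u_0(x_0)$, $u_1'(x_0)=u_0'(x_0)$, $u_2(x_0)=0$, $u_2'(x_0)=\dfrac{1}{p(x_0)u_0(x_0)}$.
   Context: Notation: for a function $f$ on $[x_1,x_2]$, $\int f$ denotes the function $x\mapsto\int_{x_0}^x f(s)\,ds$. For $\mathbf j=(j_1,\dots,j_d)$, $|\mathbf j|=j_1+\cdots+j_d$; $\delta_i$ is the $i$-th standard basis vector; $\mathbf 1=(1,\dots,1)$; $\lambda^{\mathbf n}=\lambda_1^{n_1}\cdots\lambda_d^{n_d}$. Formal powers $\tilde X$: indexed by $\mathbf j\in\mathbb Z^d$. Call $\mathbf j$ admissible if at most one entry $j_i$ is odd; it is even/odd according to the parity of $|\mathbf j|$ (odd admissible means exactly one $j_i$ is odd). Set $\tilde X^{(\mathbf 0)}\equiv1$ and $\tilde X^{(\mathbf j)}\equiv0$ if some $j_i<0$. For admissible $\mathbf j\ge 0$, $\mathbf j\ne\mathbf 0$: if $|\mathbf j|$ is odd and $j_i$ is its odd entry, $\tilde X^{(\mathbf j)}=|\mathbf j|\int r_iu_0^2\,\tilde X^{(\mathbf j-\delta_i)}$; if $|\mathbf j|$ is even, $\tilde X^{(\mathbf j)}=|\mathbf j|\int\frac{1}{pu_0^2}\sum_{i=1}^d\tilde X^{(\mathbf j-\delta_i)}$.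 Formal powers $X$: indexed by $\mathbf j=\mathbf m+\frac1d\mathbf 1$ with $\mathbf m\in\mathbb Z^d$, so $|\mathbf j|=|\mathbf m|+1$. Call $\mathbf j$ admissible if at most one $m_i$ is odd; its parity is that of $|\mathbf j|$. Set $X^{(\frac1d\mathbf 1-\delta_i)}\equiv\frac1d$ for $i=1,\dots,d$, and $X^{(\mathbf m+\frac1d\mathbf 1)}\equiv0$ whenever some $m_i<0$ and $\mathbf m$ is not one of $-\delta_1,\dots,-\delta_d$. For admissible $\mathbf j=\mathbf m+\frac1d\mathbf 1$ with $\mathbf m\ge0$: if $|\mathbf j|$ is even (so exactly one $m_i$ is odd), $X^{(\mathbf j)}=|\mathbf j|\int r_iu_0^2\,X^{(\mathbf j-\delta_i)}$ with that index $i$; if $|\mathbf j|$ is odd, $X^{(\mathbf j)}=|\mathbf j|\int\frac{1}{pu_0^2}\sum_{i=1}^dX^{(\mathbf j-\delta_i)}$. *)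

(* Defs.v *)
From Stdlib Require Import Reals ZArith List.
From Coquelicot Require Import Coquelicot.

Open Scope C_scope.

Definition cont_on (a b : R) (f : R -> C) : Prop :=
  forall x, (a <= x <= b)%R ->
    filterlim f (within (fun y => (a <= y <= b)%R) (locally x)) (locally (f x)).

Definition has_deriv_on (a b : R) (f f' : R -> C) : Prop :=
  forall x, (a <= x <= b)%R ->
    filterlim (fun y => (f y - f x) / RtoC (y - x))
      (within (fun y => (a <= y <= b)%R /\ y <> x) (locally x)) (locally (f' x)).

Definition unif_cv_on (a b : R) (S : nat -> R -> C) (f : R -> C) : Prop :=
  forall eps : R, (0 < eps)%R -> exists N : nat, forall n x, (N <= n)%nat ->
    (a <= x <= b)%R -> (Cmod (S n x - f x) < eps)%R.

Definition cint (x0 : R) (f : R -> C) : R -> C :=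
  fun x => @RInt C_R_CompleteNormedModule f x0 x.

Fixpoint csum (f : nat -> C) (n : nat) : C :=
  match n with O => 0 | S k => csum f k + f k end.

Fixpoint cprod (f : nat -> C) (n : nat) : C :=
  match n with O => 1 | S k => cprod f k * f k end.

(* A multi-index in Z_{>=0}^d (resp. Z^d) is a function nat -> nat (resp.
   nat -> Z) of which only the entries 0..d-1 are used; the paper's index
   i = 1..d corresponds to i-1 here. *)

Definition nsize (d : nat) (n : nat -> nat) : nat :=
  fold_right Nat.add 0%nat (map n (seq 0 d)).

Definition zsize (d : nat) (j : nat -> Z) : Z :=
  fold_right Z.add 0%Z (map j (seq 0 d)).

Definition ncons (a : nat) (n : nat -> nat) : nat -> nat :=
  fun l => match l with O => a | S l' => n l' end.

(* msum_le d N F = sum of F n over all n in Z_{>=0}^d with |n| <= N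
   (the multi-indices are produced with entries 0 beyond d). *)
Fixpoint msum_le (d N : nat) (F : (nat -> nat) -> C) : C :=
  match d with
  | O => F (fun _ => 0%nat)
  | S d' => csum (fun a => msum_le d' (N - a) (fun n => F (ncons a n))) (S N)
  end.

Definition mpow (d : nat) (lam : nat -> C) (n : nat -> nat) : C :=
  cprod (fun i => Cpow (lam i) (n i)) d.

Definition zdelta (i : nat) : nat -> Z := fun l => if Nat.eqb l i then 1%Z else 0%Z.

Definition zsub (j k : nat -> Z) : nat -> Z := fun l => (j l - k l)%Z.

Definition twice (n : nat -> nat) : nat -> Z := fun l => (2 * Z.of_nat (n l))%Z.

Definition has_neg (d : nat) (j : nat -> Z) : bool :=
  existsb (fun i => Z.ltb (j i) 0) (seq 0 d).

Definition all_zero (d : nat) (j : nat -> Z) : bool :=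
  forallb (fun i => Z.eqb (j i) 0) (seq 0 d).

Definition odd_entries (d : nat) (j : nat -> Z) : list nat :=
  filter (fun i => Z.odd (j i)) (seq 0 d).

Definition is_minus_delta (d : nat) (m : nat -> Z) : bool :=
  existsb (fun i => forallb (fun l => Z.eqb (m l) (if Nat.eqb l i then (-1)%Z else 0%Z))
                            (seq 0 d)) (seq 0 d).

Section FormalPowers.
Variables (d : nat) (x0 : R) (p u0 : R -> C) (r : nat -> R -> C).

Definition zC (z : Z) : C := RtoC (IZR z).

(* tilde X with fuel k (k = |j| when called from Xt below) *)
Fixpoint Xt_f (k : nat) (j : nat -> Z) : R -> C :=
  if has_neg d j then (fun _ => 0)
  else if all_zero d j then (fun _ => 1)
  else match k with
  | O => fun _ => 0
  | S k' =>
    match odd_entries d j with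
    | i :: nil =>       (* |j| odd, odd entry j_i *)
        fun x => zC (zsize d j) *
          cint x0 (fun s => r i s * u0 s * u0 s * Xt_f k' (zsub j (zdelta i)) s) x
    | nil =>            (* |j| even *)
        fun x => zC (zsize d j) *
          cint x0 (fun s => / (p s * u0 s * u0 s) *
                     csum (fun i => Xt_f k' (zsub j (zdelta i)) s) d) x
    | _ => fun _ => 0   (* non-admissible index: never used *)
    end
  end.

Definition Xt (j : nat -> Z) : R -> C := Xt_f (Z.to_nat (zsize d j)) j.

(* X^{(m + 1/d 1)} with fuel k (k = |m| + 1 when called from X below) *)
Fixpoint X_f (k : nat) (m : nat -> Z) : R -> C :=
  if is_minus_delta d m then (fun _ => / RtoC (INR d))
  else if has_neg d m then (fun _ => 0)
  else match k with
  | O => fun _ => 0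
  | S k' =>
    match odd_entries d m with
    | i :: nil =>       (* |j| = |m|+1 even, odd entry m_i *)
        fun x => zC (zsize d m + 1) *
          cint x0 (fun s => r i s * u0 s * u0 s * X_f k' (zsub m (zdelta i)) s) x
    | nil =>            (* |j| = |m|+1 odd *)
        fun x => zC (zsize d m + 1) *
          cint x0 (fun s => / (p s * u0 s * u0 s) *
                     csum (fun i => X_f k' (zsub m (zdelta i)) s) d) x
    | _ => fun _ => 0   (* non-admissible index: never used *)
    end
  end.

Definition X (m : nat -> Z) : R -> C := X_f (Z.to_nat (zsize d m + 1)) m.

End FormalPowers.

Definition cfact (n : nat) : C := RtoC (INR (fact n)).

(* Main.v *)
Require Import Defs.
From Stdlib Require Import Reals ZArith List.
From Coquelicot Require Import Coquelicot.
From Stdlib Require Import Lra Lia FunctionalExtensionality ClassicalEpsilon.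
Open Scope C_scope.


Lemma ball_R (x y e : R) : Rabs (y - x) < e -> ball x e y.
Proof. intros H. exact H. Qed.
Lemma ball_R' (x y e : R) : ball x e y -> Rabs (y - x) < e.
Proof. intros H. exact H. Qed.

Lemma lim_within (P : R -> Prop) (x : R) (g : R -> C) (L : C) :
  filterlim g (within P (locally x)) (locally L) <->
  (forall eps, (0 < eps)%R -> exists del, (0 < del)%R /\
     forall y, P y -> (Rabs (y - x) < del)%R -> (Cmod (g y - L) < eps)%R).
Proof.
split.
- intros H eps Heps.
  assert (Hs2 : (0 < sqrt 2)%R) by (apply sqrt_lt_R0; lra).
  assert (Hs : (0 < eps / sqrt 2)%R) by (apply Rdiv_lt_0_compat; lra).
  destruct (proj1 (filterlim_locally g L) H (mkposreal _ Hs)) as [del Hdel].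
  exists del. split; [apply cond_pos|].
  intros y HP Hy.
  specialize (Hdel y (ball_R _ _ _ Hy) HP).
  apply C_NormedModule_mixin_compat2 in Hdel. simpl in Hdel.
  replace eps with (sqrt 2 * (eps / sqrt 2))%R by (field; lra).
  exact Hdel.
- intros H. apply filterlim_locally. intros eps.
  destruct (H eps (cond_pos eps)) as [del [Hd H1]].
  exists (mkposreal del Hd). intros y Hy HP.
  apply C_NormedModule_mixin_compat1. apply H1; auto.
Qed.

Lemma flim_C {T} {F : (T -> Prop) -> Prop} {FF : Filter F} (f : T -> C) (L : C) :
  filterlim f F (locally L) <->
  (forall eps, (0 < eps)%R -> F (fun y => (Cmod (f y - L) < eps)%R)).
Proof.
split.
- intros H eps Heps.
  assert (Hs2 : (0 < sqrt 2)%R) by (apply sqrt_lt_R0; lra).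
  assert (Hs : (0 < eps / sqrt 2)%R) by (apply Rdiv_lt_0_compat; lra).
  generalize (proj1 (filterlim_locally f L) H (mkposreal _ Hs)).
  apply filter_imp. intros y Hy.
  apply C_NormedModule_mixin_compat2 in Hy. simpl in Hy.
  replace eps with (sqrt 2 * (eps / sqrt 2))%R by (field; lra). exact Hy.
- intros H. apply filterlim_locally. intros eps.
  generalize (H eps (cond_pos eps)). apply filter_imp. intros y Hy.
  apply C_NormedModule_mixin_compat1. exact Hy.
Qed.

Lemma flim_plus {T} {F : (T -> Prop) -> Prop} {FF : Filter F} (f g : T -> C) (a b : C) :
  filterlim f F (locally a) -> filterlim g F (locally b) ->
  filterlim (fun y => f y + g y) F (locally (a + b)).
Proof.
intros Hf Hg. apply (filterlim_comp_2 f g Cplus Hf Hg).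
apply (@filterlim_plus C_AbsRing C_NormedModule a b).
Qed.

Lemma flim_mult {T} {F : (T -> Prop) -> Prop} {FF : Filter F} (f g : T -> C) (a b : C) :
  filterlim f F (locally a) -> filterlim g F (locally b) ->
  filterlim (fun y => f y * g y) F (locally (a * b)).
Proof.
intros Hf Hg. apply flim_C. intros eps Heps.
assert (Ha := Cmod_ge_0 a). assert (Hb := Cmod_ge_0 b).
set (K := (Cmod a + Cmod b + 1)%R).
set (del := Rmin 1 (eps / (2 * K))).
assert (HK : (0 < K)%R) by (unfold K; lra).
assert (Hdel : (0 < del)%R).
{ unfold del. apply Rmin_pos. lra. apply Rdiv_lt_0_compat; lra. }
generalize (filter_and _ _ (proj1 (flim_C f a) Hf del Hdel) (proj1 (flim_C g b) Hg del Hdel)).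
apply filter_imp. intros y [Hy1 Hy2].
assert (Hd1 : (del <= 1)%R) by apply Rmin_l.
assert (Hd2 : (del <= eps / (2 * K))%R) by apply Rmin_r.
replace (f y * g y - a * b) with ((f y - a) * g y + a * (g y - b)) by ring.
eapply Rle_lt_trans. apply Cmod_triangle. rewrite !Cmod_mult.
assert (Hgy : (Cmod (g y) <= Cmod b + 1)%R).
{ assert (Htr := Cmod_triangle b (g y - b)). replace (b + (g y - b)) with (g y) in Htr by ring. lra. }
apply Rle_lt_trans with (del * (Cmod b + 1) + Cmod a * del)%R.
- apply Rplus_le_compat.
  + apply Rmult_le_compat; try apply Cmod_ge_0; lra.
  + apply Rmult_le_compat_l; lra.
- apply Rle_lt_trans with (del * K)%R. unfold K; nra.
  apply Rle_lt_trans with (eps / (2 * K) * K)%R. apply Rmult_le_compat_r; lra.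
  replace (eps / (2 * K) * K)%R with (eps / 2)%R by (field; lra). lra.
Qed.

Lemma flim_const {T} {F : (T -> Prop) -> Prop} {FF : Filter F} (c : C) :
  filterlim (fun _ : T => c) F (locally c).
Proof. apply filterlim_const. Qed.

Lemma flim_opp {T} {F : (T -> Prop) -> Prop} {FF : Filter F} (f : T -> C) (a : C) :
  filterlim f F (locally a) -> filterlim (fun y => - f y) F (locally (- a)).
Proof.
intros Hf.
assert (H := flim_mult (fun _ => Copp 1) f (Copp 1) a (flim_const _) Hf).
replace (- a) with (Copp 1 * a) by ring.
eapply filterlim_ext; [|exact H]. intros y; simpl; ring.
Qed.

Lemma flim_minus {T} {F : (T -> Prop) -> Prop} {FF : Filter F} (f g : T -> C) (a b : C) :
  filterlim f F (locally a) -> filterlim g F (locally b) ->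
  filterlim (fun y => f y - g y) F (locally (a - b)).
Proof. intros Hf Hg. apply flim_plus; auto. apply flim_opp; auto. Qed.

Lemma Cmod_minus_sym (u v : C) : Cmod (u - v) = Cmod (v - u).
Proof. replace (u - v) with (- (v - u)) by ring. rewrite Cmod_opp. reflexivity. Qed.

Lemma flim_inv {T} {F : (T -> Prop) -> Prop} {FF : Filter F} (f : T -> C) (a : C) :
  a <> 0 -> filterlim f F (locally a) -> filterlim (fun y => / f y) F (locally (/ a)).
Proof.
intros Ha Hf. apply flim_C. intros eps Heps.
assert (Hma : (0 < Cmod a)%R) by (apply (proj1 (Cmod_gt_0 a)); auto).
set (del := Rmin (Cmod a / 2) (eps * (Cmod a * Cmod a) / 2)).
assert (Hdel : (0 < del)%R).
{ unfold del. apply Rmin_pos. lra. apply Rdiv_lt_0_compat; [|lra].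
  apply Rmult_lt_0_compat; auto. apply Rmult_lt_0_compat; auto. }
generalize (proj1 (flim_C f a) Hf del Hdel). apply filter_imp. intros y Hy.
assert (Hfy : (Cmod a / 2 < Cmod (f y))%R).
{ assert (Htr := Cmod_triangle (f y) (a - f y)).
  replace (f y + (a - f y)) with a in Htr by ring.
  rewrite Cmod_minus_sym in Hy.
  assert (del <= Cmod a / 2)%R by apply Rmin_l. lra. }
assert (Hfy0 : f y <> 0).
{ intros E. rewrite E, Cmod_0 in Hfy. lra. }
replace (/ f y - / a) with ((a - f y) * / f y * / a) by (field; auto).
rewrite !Cmod_mult, !Cmod_inv by auto.
rewrite Cmod_minus_sym.
assert (Hd2 : (del <= eps * (Cmod a * Cmod a) / 2)%R) by apply Rmin_r.
apply Rlt_le_trans with (del * / (Cmod a / 2) * / Cmod a)%R.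
- apply Rmult_lt_compat_r. apply Rinv_0_lt_compat; auto.
  apply Rle_lt_trans with (Cmod (f y - a) * / (Cmod a / 2))%R.
  + apply Rmult_le_compat_l. apply Cmod_ge_0. apply Rinv_le_contravar; lra.
  + apply Rmult_lt_compat_r. apply Rinv_0_lt_compat; lra. auto.
- apply Rle_trans with (eps * (Cmod a * Cmod a) / 2 * / (Cmod a / 2) * / Cmod a)%R.
  + apply Rmult_le_compat_r. left; apply Rinv_0_lt_compat; auto.
    apply Rmult_le_compat_r. left; apply Rinv_0_lt_compat; lra. auto.
  + replace (eps * (Cmod a * Cmod a) / 2 * / (Cmod a / 2) * / Cmod a)%R with eps by (field; lra).
    lra.
Qed.

Lemma flim_csum {T} {F : (T -> Prop) -> Prop} {FF : Filter F} (G : nat -> T -> C) (L : nat -> C) n :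
  (forall i, (i < n)%nat -> filterlim (G i) F (locally (L i))) ->
  filterlim (fun y => csum (fun i => G i y) n) F (locally (csum L n)).
Proof.
induction n; intros H; simpl.
- apply flim_const.
- apply flim_plus. apply IHn. intros; apply H; lia. apply H; lia.
Qed.


Definition Fw (a b x : R) := within (fun y => (a <= y <= b)%R) (locally x).
Definition Fp (a b x : R) := within (fun y => (a <= y <= b)%R /\ y <> x) (locally x).

Lemma Fw_Fp a b x (h : R -> C) L :
  filterlim h (Fw a b x) L -> filterlim h (Fp a b x) L.
Proof.
intros H P HP. specialize (H P HP). unfold filtermap, Fw, Fp, within in *.
revert H; apply filter_imp. tauto.
Qed.

Section Calc.
Variables a b : R.
Hypothesis Hab : (a < b)%R.

Lemma cont_const (c : C) : cont_on a b (fun _ => c).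
Proof. intros x Hx. apply flim_const. Qed.

Lemma cont_plus f g : cont_on a b f -> cont_on a b g -> cont_on a b (fun x => f x + g x).
Proof. intros Hf Hg x Hx. apply flim_plus; auto. Qed.

Lemma cont_mult f g : cont_on a b f -> cont_on a b g -> cont_on a b (fun x => f x * g x).
Proof. intros Hf Hg x Hx. apply flim_mult; auto. Qed.

Lemma cont_minus f g : cont_on a b f -> cont_on a b g -> cont_on a b (fun x => f x - g x).
Proof. intros Hf Hg x Hx. apply flim_minus; auto. Qed.

Lemma cont_inv f : cont_on a b f -> (forall x, (a <= x <= b)%R -> f x <> 0) ->
  cont_on a b (fun x => / f x).
Proof. intros Hf H0 x Hx. apply flim_inv; auto. Qed.

Lemma cont_csum (G : nat -> R -> C) n : (forall i, (i < n)%nat -> cont_on a b (G i)) ->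
  cont_on a b (fun x => csum (fun i => G i x) n).
Proof. intros H x Hx. apply (flim_csum G (fun i => G i x)). intros i Hi. apply H; auto. Qed.

Lemma cont_ext f g : (forall x, (a <= x <= b)%R -> f x = g x) -> cont_on a b f -> cont_on a b g.
Proof.
intros E Hf x Hx. rewrite <- E by auto.
apply (filterlim_within_ext _ f g E). apply Hf; auto.
Qed.

Lemma deriv_cont f f' : has_deriv_on a b f f' -> cont_on a b f.
Proof.
intros Hd x Hx. apply lim_within. intros eps Heps.
destruct (proj1 (lim_within _ _ _ _) (Hd x Hx) 1%R Rlt_0_1) as [del [Hdel H]].
set (K := (Cmod (f' x) + 1)%R).
assert (HK : (0 < K)%R) by (unfold K; generalize (Cmod_ge_0 (f' x)); lra).
exists (Rmin del (eps / K)). split.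
{ apply Rmin_pos; auto. apply Rdiv_lt_0_compat; auto. }
intros y Hy Hyx.
destruct (Req_dec y x) as [E|E].
{ subst y. replace (f x - f x) with (RtoC 0) by ring. rewrite Cmod_0; auto. }
assert (Hyx1 : (Rabs (y - x) < del)%R) by (eapply Rlt_le_trans; [exact Hyx| apply Rmin_l]).
assert (Hyx2 : (Rabs (y - x) < eps / K)%R) by (eapply Rlt_le_trans; [exact Hyx| apply Rmin_r]).
specialize (H y (conj Hy E) Hyx1).
assert (Hne : RtoC (y - x) <> 0).
{ intros E'. apply E. apply RtoC_inj in E'. lra. }
assert (Hq : (Cmod ((f y - f x) / RtoC (y - x)) <= K)%R).
{ assert (Htr := Cmod_triangle (f' x) ((f y - f x) / RtoC (y - x) - f' x)).
  replace (f' x + ((f y - f x) / RtoC (y - x) - f' x)) with ((f y - f x) / RtoC (y - x)) in Htr by ring.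
  unfold K; lra. }
replace (f y - f x) with ((f y - f x) / RtoC (y - x) * RtoC (y - x)) by (field; auto).
rewrite Cmod_mult, Cmod_R.
apply Rle_lt_trans with (K * Rabs (y - x))%R.
- apply Rmult_le_compat_r; auto. apply Rabs_pos.
- apply Rlt_le_trans with (K * (eps / K))%R. apply Rmult_lt_compat_l; auto.
  right; field; lra.
Qed.

Lemma deriv_ext f g f' g' : (forall x, (a <= x <= b)%R -> f x = g x) ->
  (forall x, (a <= x <= b)%R -> f' x = g' x) ->
  has_deriv_on a b f f' -> has_deriv_on a b g g'.
Proof.
intros E E' Hd x Hx. rewrite <- E' by auto.
apply (filterlim_within_ext _ (fun y => (f y - f x) / RtoC (y - x))).
- intros y [Hy _]. rewrite !E; auto.
- apply Hd; auto.
Qed.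

Lemma deriv_plus f g f' g' : has_deriv_on a b f f' -> has_deriv_on a b g g' ->
  has_deriv_on a b (fun x => f x + g x) (fun x => f' x + g' x).
Proof.
intros Hf Hg x Hx.
eapply filterlim_ext; [|apply flim_plus; [apply Hf; auto|apply Hg; auto]].
intros y. simpl. unfold Cdiv. ring.
Qed.

Lemma deriv_mult f g f' g' : has_deriv_on a b f f' -> has_deriv_on a b g g' ->
  has_deriv_on a b (fun x => f x * g x) (fun x => f' x * g x + f x * g' x).
Proof.
intros Hf Hg x Hx.
assert (Hcf := Fw_Fp a b x f _ (deriv_cont f f' Hf x Hx)).
eapply filterlim_ext; [|apply flim_plus; [apply flim_mult; [apply Hf; auto| apply (flim_const (g x))]
   | apply flim_mult; [exact Hcf | apply Hg; auto]]].
intros y. simpl. unfold Cdiv. ring.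
Qed.

Lemma deriv_const (c : C) : has_deriv_on a b (fun _ => c) (fun _ => 0).
Proof.
intros x Hx. eapply filterlim_ext; [|apply (flim_const 0)].
intros y. simpl. unfold Cdiv. ring.
Qed.

Lemma deriv_inv g g' : has_deriv_on a b g g' -> (forall x, (a <= x <= b)%R -> g x <> 0) ->
  has_deriv_on a b (fun x => / g x) (fun x => - g' x * / (g x * g x)).
Proof.
intros Hg H0 x Hx.
assert (Hcg := Fw_Fp a b x g _ (deriv_cont g g' Hg x Hx)).
apply (filterlim_within_ext _ (fun y => - ((g y - g x) / RtoC (y - x)) * / (g y * g x))).
- intros y [Hy Hyx]. assert (Hne : RtoC (y - x) <> 0).
  { intros E'. apply Hyx. apply RtoC_inj in E'. lra. }
  field. repeat split; auto.
- apply flim_mult. apply flim_opp. apply Hg; auto.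
  apply flim_inv. apply Cmult_neq_0; auto.
  apply flim_mult; auto. apply flim_const.
Qed.

End Calc.


Lemma is_RInt_Cmult (f : R -> C) (u v : R) (l c : C) :
  @is_RInt C_R_NormedModule f u v l ->
  @is_RInt C_R_NormedModule (fun s => c * f s) u v (c * l).
Proof.
intros H.
destruct c as [c1 c2]. destruct l as [l1 l2].
assert (H1 := @is_RInt_fct_extend_fst R_NormedModule R_NormedModule f u v (l1, l2) H).
assert (H2 := @is_RInt_fct_extend_snd R_NormedModule R_NormedModule f u v (l1, l2) H).
simpl in H1, H2.
apply (@is_RInt_fct_extend_pair R_NormedModule R_NormedModule (fun s => (c1, c2) * f s)).
- assert (K : @is_RInt R_NormedModule (fun s => minus (scal c1 (fst (f s))) (scal c2 (snd (f s)))) u v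
      (minus (scal c1 l1) (scal c2 l2))).
  { apply (@is_RInt_minus R_NormedModule); apply (@is_RInt_scal R_NormedModule); auto. }
  match goal with |- is_RInt _ _ _ ?L => replace L with (minus (scal c1 l1) (scal c2 l2)) end.
  2:{ unfold minus, plus, opp, scal; simpl. unfold mult; simpl. ring. }
  eapply is_RInt_ext; [|exact K].
  intros s _. unfold minus, plus, opp, scal; simpl. unfold mult; simpl. destruct (f s); simpl. ring.
- assert (K : @is_RInt R_NormedModule (fun s => plus (scal c1 (snd (f s))) (scal c2 (fst (f s)))) u v
      (plus (scal c1 l2) (scal c2 l1))).
  { apply (@is_RInt_plus R_NormedModule); apply (@is_RInt_scal R_NormedModule); auto. }
  match goal with |- is_RInt _ _ _ ?L => replace L with (plus (scal c1 l2) (scal c2 l1)) end.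
  2:{ unfold plus, scal; simpl. unfold mult; simpl. ring. }
  eapply is_RInt_ext; [|exact K].
  intros s _. unfold plus, scal; simpl. unfold mult; simpl. destruct (f s); simpl. ring.
Qed.

Definition cl (a b x : R) : R := Rmax a (Rmin b x).

Lemma cl_in a b x : (a <= b)%R -> (a <= cl a b x <= b)%R.
Proof. intros H. unfold cl, Rmax, Rmin. repeat destruct Rle_dec; lra. Qed.

Lemma cl_id a b x : (a <= x <= b)%R -> cl a b x = x.
Proof. intros H. unfold cl, Rmax, Rmin. repeat destruct Rle_dec; lra. Qed.

Lemma cl_lip a b y z : (a <= b)%R -> (Rabs (cl a b y - cl a b z) <= Rabs (y - z))%R.
Proof.
intros H. unfold cl, Rmax, Rmin.
repeat destruct Rle_dec; unfold Rabs; repeat destruct Rcase_abs; lra.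
Qed.

Lemma cont_clamp a b (f : R -> C) : (a <= b)%R -> cont_on a b f ->
  forall z, continuous (fun y => f (cl a b y)) z.
Proof.
intros Hab Hf z. unfold continuous.
apply (filterlim_comp _ _ _ (cl a b) f (locally z) (within (fun y => (a <= y <= b)%R) (locally (cl a b z)))).
- intros P [eps HP]. exists eps. intros y Hy. apply HP.
  + apply ball_R. apply ball_R' in Hy. eapply Rle_lt_trans; [apply cl_lip; auto|]. exact Hy.
  + apply cl_in; auto.
- apply Hf. apply cl_in; auto.
Qed.

Section Integrals.
Variables a b : R.
Hypothesis Hab : (a < b)%R.
Notation I x := (a <= x <= b)%R.

Lemma exRI f u v : cont_on a b f -> I u -> I v -> @ex_RInt C_R_NormedModule f u v.
Proof.
intros Hf Hu Hv.
apply (ex_RInt_ext (fun y => f (cl a b y))).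
- intros x Hx. rewrite cl_id; auto.
  split. apply Rle_trans with (Rmin u v); [apply Rmin_glb; lra|]. lra.
  apply Rle_trans with (Rmax u v); [lra| apply Rmax_lub; lra].
- apply (@ex_RInt_continuous C_R_CompleteNormedModule).
  intros z _. apply cont_clamp; auto. lra.
Qed.

Lemma cint_ext x0 f g x : I x0 -> I x -> (forall s, I s -> f s = g s) -> cint x0 f x = cint x0 g x.
Proof.
intros H0 Hx E. unfold cint. apply (@RInt_ext C_R_CompleteNormedModule). intros s Hs. apply E.
split. apply Rle_trans with (Rmin x0 x); [apply Rmin_glb; lra|]. lra.
apply Rle_trans with (Rmax x0 x); [lra| apply Rmax_lub; lra].
Qed.

Lemma cint_point x0 f : cint x0 f x0 = 0.
Proof. unfold cint. rewrite RInt_point. reflexivity. Qed.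

Lemma cint_plus x0 f g x : I x0 -> I x -> cont_on a b f -> cont_on a b g ->
  cint x0 (fun s => f s + g s) x = cint x0 f x + cint x0 g x.
Proof.
intros H0 Hx Hf Hg. unfold cint.
apply (@RInt_plus C_R_CompleteNormedModule f g); apply exRI; auto.
Qed.

Lemma cint_Cmult x0 (c : C) f x : I x0 -> I x -> cont_on a b f ->
  cint x0 (fun s => c * f s) x = c * cint x0 f x.
Proof.
intros H0 Hx Hf. unfold cint.
apply (@is_RInt_unique C_R_CompleteNormedModule). apply is_RInt_Cmult.
apply (@RInt_correct C_R_CompleteNormedModule). apply exRI; auto.
Qed.

Lemma cint_zero x0 x : cint x0 (fun _ => 0) x = 0.
Proof.
unfold cint. rewrite RInt_const. unfold scal; simpl. unfold prod_scal; simpl.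
unfold scal; simpl. unfold mult; simpl. apply injective_projections; simpl; ring.
Qed.

Lemma cint_csum x0 (G : nat -> R -> C) n x : I x0 -> I x ->
  (forall i, (i < n)%nat -> cont_on a b (G i)) ->
  cint x0 (fun s => csum (fun i => G i s) n) x = csum (fun i => cint x0 (G i) x) n.
Proof.
intros H0 Hx. induction n; intros H; simpl.
- apply cint_zero.
- assert (Hc : cont_on a b (fun s => csum (fun i => G i s) n)).
  { apply (cont_csum a b G n). intros; apply H; lia. }
  rewrite (cint_plus x0 (fun s => csum (fun i => G i s) n) (G n) x H0 Hx Hc) by (apply H; lia).
  rewrite IHn; auto.
Qed.

Lemma cint_diff x0 f x y : I x0 -> I x -> I y -> cont_on a b f ->
  cint x0 f y - cint x0 f x = @RInt C_R_CompleteNormedModule f x y.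
Proof.
intros H0 Hx Hy Hf. unfold cint.
rewrite <- (@RInt_Chasles C_R_CompleteNormedModule f x0 x y) by (apply exRI; auto).
set (A := @RInt C_R_CompleteNormedModule f x0 x). set (B := @RInt C_R_CompleteNormedModule f x y).
change (Cplus A B - A = B). ring.
Qed.

Lemma RInt_bound f u v M : I u -> I v -> cont_on a b f ->
  (forall s, (Rmin u v <= s <= Rmax u v)%R -> (Cmod (f s) <= M)%R) ->
  (Cmod (@RInt C_R_CompleteNormedModule f u v) <= Rabs (v - u) * M)%R.
Proof.
intros Hu Hv Hf HM.
assert (Hb : forall u v, I u -> I v -> (u <= v)%R ->
  (forall s, (u <= s <= v)%R -> (Cmod (f s) <= M)%R) ->
  (Cmod (@RInt C_R_CompleteNormedModule f u v) <= (v - u) * M)%R).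
{ clear u v Hu Hv HM. intros u v Hu Hv Huv HM.
  rewrite Cmod_norm.
  apply (@norm_RInt_le C_R_NormedModule f (fun _ => M) u v _ ((v - u) * M)%R Huv).
  - intros s Hs. rewrite <- Cmod_norm. apply HM. auto.
  - apply (@RInt_correct C_R_CompleteNormedModule). apply exRI; auto.
  - exact (@is_RInt_const R_NormedModule u v M). }
destruct (Rle_dec u v) as [Huv|Huv].
- rewrite Rabs_right by lra. apply Hb; auto. intros s Hs. apply HM.
  rewrite Rmin_left, Rmax_right; lra.
- rewrite Rabs_left by lra.
  rewrite <- (@opp_RInt_swap C_R_CompleteNormedModule) by (apply exRI; auto).
  change (Cmod (Copp (@RInt C_R_CompleteNormedModule f v u)) <= - (v - u) * M)%R. rewrite Cmod_opp.
  replace (- (v - u))%R with (u - v)%R by ring. apply Hb; auto. lra.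
  intros s Hs. apply HM. rewrite Rmin_right, Rmax_left; lra.
Qed.


Lemma RInt_const_C (c : C) u v : @RInt C_R_CompleteNormedModule (fun _ => c) u v = RtoC (v - u) * c.
Proof.
rewrite RInt_const. destruct c. unfold scal; simpl. unfold prod_scal; simpl.
unfold scal; simpl. unfold mult; simpl. unfold Cmult, RtoC; simpl. apply injective_projections; simpl; ring.
Qed.

Lemma deriv_cint x0 f : I x0 -> cont_on a b f -> has_deriv_on a b (cint x0 f) f.
Proof.
intros H0 Hf x Hx. apply lim_within. intros eps Heps.
destruct (proj1 (lim_within _ _ _ _) (Hf x Hx) (eps / 2)%R) as [del [Hdel H]]. lra.
exists del. split; auto. intros y [Hy Hyx] Hyd.
assert (Hne : RtoC (y - x) <> 0).
{ intros E'. apply Hyx. apply RtoC_inj in E'. lra. }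
rewrite cint_diff; auto.
assert (E : @RInt C_R_CompleteNormedModule f x y / RtoC (y - x) - f x =
   @RInt C_R_CompleteNormedModule (fun s => f s - f x) x y / RtoC (y - x)).
{ assert (E2 := @RInt_minus C_R_CompleteNormedModule f (fun _ => f x) x y).
  change (minus ?A ?B) with (Cminus A B) in E2.
  change (fun s : R => minus (f s) (f x)) with (fun s : R => f s - f x) in E2.
  rewrite E2 by (apply exRI; auto; apply cont_const).
  rewrite RInt_const_C. field; auto. }
rewrite E. rewrite Cmod_div by auto. rewrite Cmod_R.
assert (Hpos : (0 < Rabs (y - x))%R) by (apply Rabs_pos_lt; lra).
apply Rle_lt_trans with (eps / 2)%R; [|lra].
apply Rmult_le_reg_r with (Rabs (y - x)); auto.
unfold Rdiv. rewrite Rmult_assoc, Rinv_l by lra. rewrite Rmult_1_r.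
rewrite Rmult_comm.
apply RInt_bound; auto.
- apply cont_minus; auto. apply cont_const.
- intros s Hs. left. apply H.
  + split. apply Rle_trans with (Rmin x y); [apply Rmin_glb; lra|]. lra.
    apply Rle_trans with (Rmax x y); [lra| apply Rmax_lub; lra].
  + apply Rle_lt_trans with (Rabs (y - x)); auto.
    unfold Rmin, Rmax in Hs. destruct Rle_dec; unfold Rabs; repeat destruct Rcase_abs; lra.
Qed.

Lemma cont_cint x0 f : I x0 -> cont_on a b f -> cont_on a b (cint x0 f).
Proof. intros H0 Hf. apply (deriv_cont a b _ f). apply deriv_cint; auto. Qed.


Lemma pow_deriv1 A x0 k s : is_derive (fun s => A * (s - x0)^(S k) / INR (S k))%R s (A * (s-x0)^k)%R.
Proof.
auto_derive. auto. change (match k with 0%nat => 1 | S _ => INR k + 1 end)%R with (INR (S k)).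
assert (INR (S k) <> 0)%R by (apply not_0_INR; auto). unfold Rminus. field. auto.
Qed.

Lemma pow_deriv2 A x0 k s : is_derive (fun s => - A * (x0 - s)^(S k) / INR (S k))%R s (A * (x0 - s)^k)%R.
Proof.
auto_derive. auto. change (match k with 0%nat => 1 | S _ => INR k + 1 end)%R with (INR (S k)).
assert (INR (S k) <> 0)%R by (apply not_0_INR; auto). unfold Rminus. field. auto.
Qed.

Lemma cint_pow_bound x0 f x A k : I x0 -> I x -> cont_on a b f ->
  (forall s, I s -> (Cmod (f s) <= A * Rabs (s - x0) ^ k)%R) ->
  (Cmod (cint x0 f x) <= A * Rabs (x - x0) ^ (S k) / INR (S k))%R.
Proof.
intros H0 Hx Hf HA.
assert (HS : (0 < INR (S k))%R) by (apply lt_0_INR; lia).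
destruct (Rle_dec x0 x) as [Hle|Hlt].
- unfold cint. rewrite Cmod_norm.
  apply (@norm_RInt_le C_R_NormedModule f (fun s => A * (s - x0)^k)%R x0 x _ _ Hle).
  + intros s Hs. rewrite <- Cmod_norm. rewrite <- (Rabs_right (s - x0)) by lra. apply HA. lra.
  + apply (@RInt_correct C_R_CompleteNormedModule). apply exRI; auto.
  + assert (K := is_RInt_derive (V := R_CompleteNormedModule) (fun s => A * (s - x0)^(S k) / INR (S k))%R
       (fun s => A * (s - x0)^k)%R x0 x (fun s _ => pow_deriv1 A x0 k s)).
    match type of K with ?P -> _ => assert (HP : P) end.
    { intros s _. apply (ex_derive_continuous (V := R_NormedModule)). auto_derive. auto. }
    specialize (K HP). rewrite Rabs_right by lra.
    replace (A * (x - x0) ^ S k / INR (S k))%R with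
      (minus (A * (x - x0) ^ S k / INR (S k))%R (A * (x0 - x0) ^ S k / INR (S k))%R).
    exact K. change (minus ?u ?v) with (u - v)%R. rewrite Rminus_diag, pow_i by lia. rewrite Rmult_0_r; unfold Rdiv; rewrite Rmult_0_l, Rminus_0_r; reflexivity.
- unfold cint.
  rewrite <- (@opp_RInt_swap C_R_CompleteNormedModule) by (apply exRI; auto).
  change (Cmod (Copp (@RInt C_R_CompleteNormedModule f x x0)) <= A * Rabs (x - x0) ^ S k / INR (S k))%R.
  rewrite Cmod_opp, Cmod_norm.
  apply (@norm_RInt_le C_R_NormedModule f (fun s => A * (x0 - s)^k)%R x x0 _ _ ltac:(lra)).
  + intros s Hs. rewrite <- Cmod_norm.
    replace (x0 - s)%R with (Rabs (s - x0)) by (rewrite Rabs_left1 by lra; ring). apply HA. lra.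
  + apply (@RInt_correct C_R_CompleteNormedModule). apply exRI; auto.
  + assert (K := is_RInt_derive (V := R_CompleteNormedModule) (fun s => - A * (x0 - s)^(S k) / INR (S k))%R
       (fun s => A * (x0 - s)^k)%R x x0 (fun s _ => pow_deriv2 A x0 k s)).
    match type of K with ?P -> _ => assert (HP : P) end.
    { intros s _. apply (ex_derive_continuous (V := R_NormedModule)). auto_derive. auto. }
    specialize (K HP). rewrite Rabs_left by lra.
    replace (A * (- (x - x0)) ^ S k / INR (S k))%R with
      (minus (- A * (x0 - x0) ^ S k / INR (S k))%R (- A * (x0 - x) ^ S k / INR (S k))%R).
    exact K. change (minus ?u ?v) with (u - v)%R. rewrite Rminus_diag, pow_i by lia.
    replace (- (x - x0))%R with (x0 - x)%R by ring. match goal with |- ?l = ?r => change (@eq R l r) end. field. lra.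
Qed.

End Integrals.


Lemma cont_bounded a b f : (a < b)%R -> cont_on a b f ->
  exists M, forall x, (a <= x <= b)%R -> (Cmod (f x) <= M)%R.
Proof.
intros Hab Hf.
set (h := fun y => Cmod (f (cl a b y))).
destruct (continuity_ab_maj h a b ltac:(lra)) as [Mx [HM _]].
- intros c _. apply continuity_pt_filterlim.
  unfold h. apply (filterlim_comp _ _ _ (fun y => f (cl a b y)) Cmod _ (locally (f (cl a b c)))).
  + apply cont_clamp; auto. lra.
  + eapply filterlim_ext. intros z. symmetry. apply Cmod_norm.
    rewrite Cmod_norm. apply (@filterlim_norm R_AbsRing C_R_NormedModule).
- exists (h Mx). intros x Hx. specialize (HM x Hx). unfold h in HM. rewrite cl_id in HM; auto.
Qed.

Fixpoint rsum (h : nat -> R) (n : nat) : R :=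
  match n with O => 0%R | S k => (rsum h k + h k)%R end.

Lemma lim_le (u : nat -> R) l c e N : Un_cv u l -> (forall n, (N <= n)%nat -> (Rabs (u n - c) <= e)%R) ->
  (Rabs (l - c) <= e)%R.
Proof.
intros Hu H. destruct (Rle_dec (Rabs (l - c)) e) as [|Hn]; auto. exfalso.
destruct (Hu (Rabs (l - c) - e)%R) as [N1 HN1]. lra.
specialize (HN1 (Nat.max N N1) ltac:(lia)). specialize (H (Nat.max N N1) ltac:(lia)).
unfold Rdist in HN1.
assert (Htr := Rabs_triang (l - u (Nat.max N N1)) (u (Nat.max N N1) - c)).
replace (l - u (Nat.max N N1) + (u (Nat.max N N1) - c))%R with (l - c)%R in Htr by ring.
rewrite Rabs_minus_sym in HN1. lra.
Qed.

Lemma Cmod_le_2 (z : C) e : (Rabs (fst z) <= e)%R -> (Rabs (snd z) <= e)%R -> (Cmod z <= 2 * e)%R.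
Proof.
intros H1 H2. eapply Rle_trans. apply Cmod_2Rmax.
assert (Hs : (sqrt 2 <= 2)%R).
{ rewrite <- (sqrt_square 2) at 2 by lra. apply sqrt_le_1_alt. lra. }
assert (Hm : (Rmax (Rabs (fst z)) (Rabs (snd z)) <= e)%R) by (apply Rmax_lub; auto).
assert (0 <= Rmax (Rabs (fst z)) (Rabs (snd z)))%R.
{ eapply Rle_trans; [apply Rabs_pos| apply Rmax_l]. }
apply Rmult_le_compat; auto. apply sqrt_pos.
Qed.

Lemma unif_from_cauchy a b (S : nat -> R -> C) (h : nat -> R) l :
  (forall k, 0 <= h k)%R -> Un_cv (rsum h) l ->
  (forall k x, (a <= x <= b)%R -> (Cmod (S (Datatypes.S k) x - S k x) <= h k)%R) ->
  exists W, unif_cv_on a b S W.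
Proof.
intros Hh Hl HS.
assert (Hmono : forall N n, (N <= n)%nat -> (rsum h N <= rsum h n)%R).
{ intros N n Hn. induction Hn; simpl. lra. generalize (Hh m); lra. }
assert (Hle : forall n, (rsum h n <= l)%R).
{ apply growing_ineq; auto. intros n; simpl; generalize (Hh n); lra. }
assert (Hinc : forall N n x, (a <= x <= b)%R -> (N <= n)%nat ->
   (Cmod (S n x - S N x) <= rsum h n - rsum h N)%R).
{ intros N n x Hx Hn. induction Hn.
  - replace (S N x - S N x) with (RtoC 0) by ring. rewrite Cmod_0. lra.
  - simpl. replace (S (Datatypes.S m) x - S N x) with ((S (Datatypes.S m) x - S m x) + (S m x - S N x)) by ring.
    eapply Rle_trans. apply Cmod_triangle. specialize (HS m x Hx). lra. }
assert (Hcau : Cauchy_crit (rsum h)) by (apply CV_Cauchy; exists l; auto).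
assert (Hex : forall x, exists w : C, (a <= x <= b)%R ->
   Un_cv (fun n => fst (S n x)) (fst w) /\ Un_cv (fun n => snd (S n x)) (snd w)).
{ intros x. destruct (Rle_dec a x) as [H1|H1]; [destruct (Rle_dec x b) as [H2|H2]|].
  2,3: exists (RtoC 0); intros; lra.
  assert (Hc : forall (g : C -> R), (forall z, Rabs (g z) <= Cmod z)%R ->
      (forall u v : C, g (u - v) = (g u - g v)%R) -> Cauchy_crit (fun n => g (S n x))).
  { intros g Hg Hgl eps Heps. destruct (Hcau eps Heps) as [N HN]. exists N. intros n m Hn Hm.
    unfold Rdist. rewrite <- Hgl. eapply Rle_lt_trans. apply Hg.
    destruct (Nat.le_ge_cases n m) as [Hnm|Hnm].
    - rewrite Cmod_minus_sym. eapply Rle_lt_trans. apply Hinc; auto.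
      specialize (HN m n Hm Hn). unfold Rdist in HN.
      eapply Rle_lt_trans; [apply Rle_abs|]. exact HN.
    - eapply Rle_lt_trans. apply Hinc; auto.
      specialize (HN n m Hn Hm). unfold Rdist in HN.
      eapply Rle_lt_trans; [apply Rle_abs|]. exact HN. }
  destruct (Rcomplete.R_complete _ (Hc fst ltac:(intros z; eapply Rle_trans; [apply Rmax_l|apply Rmax_Cmod])
     ltac:(intros u v; reflexivity))) as [l1 H1'].
  destruct (Rcomplete.R_complete _ (Hc snd ltac:(intros z; eapply Rle_trans; [apply Rmax_r|apply Rmax_Cmod])
     ltac:(intros u v; reflexivity))) as [l2 H2'].
  exists (l1, l2). intros _. split; auto. }
set (W := fun x => proj1_sig (constructive_indefinite_description _ (Hex x))).
exists W. intros eps Heps.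
destruct (Hl (eps / 4)%R) as [N HN]. lra.
exists N. intros n x Hn Hx.
assert (HW := proj2_sig (constructive_indefinite_description _ (Hex x)) Hx).
fold (W x) in HW. destruct HW as [Hre Him].
assert (Ht : (l - rsum h n < eps / 4)%R).
{ specialize (HN n Hn). unfold Rdist in HN. rewrite Rabs_minus_sym in HN.
  eapply Rle_lt_trans; [apply Rle_abs|]. exact HN. }
assert (Hb : forall (g : C -> R), (forall z, Rabs (g z) <= Cmod z)%R ->
      (forall u v : C, g (u - v) = (g u - g v)%R) -> Un_cv (fun m => g (S m x)) (g (W x)) ->
      (Rabs (g (S n x) - g (W x)) <= l - rsum h n)%R).
{ intros g Hg Hgl Hcv. rewrite Rabs_minus_sym.
  apply (lim_le _ _ _ _ n Hcv). intros m Hm. rewrite <- Hgl.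
  eapply Rle_trans. apply Hg. eapply Rle_trans. apply Hinc; auto.
  generalize (Hle m); lra. }
apply Rle_lt_trans with (2 * (l - rsum h n))%R; [|lra].
apply Cmod_le_2.
- apply (Hb fst). intros z; eapply Rle_trans; [apply Rmax_l|apply Rmax_Cmod].
  intros u v; reflexivity. auto.
- apply (Hb snd). intros z; eapply Rle_trans; [apply Rmax_r|apply Rmax_Cmod].
  intros u v; reflexivity. auto.
Qed.


Lemma Cmod_small_0 (z : C) : (forall e, (0 < e)%R -> (Cmod z <= e)%R) -> z = 0.
Proof.
intros H. apply Cmod_eq_0. destruct (Rle_dec (Cmod z) 0).
- generalize (Cmod_ge_0 z); lra.
- specialize (H (Cmod z / 2)%R). lra.
Qed.

Section Picard.
Variables a b : R.
Hypothesis Hab : (a < b)%R.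
Notation I x := (a <= x <= b)%R.

Lemma unif_cont S W : (forall N, cont_on a b (S N)) -> unif_cv_on a b S W -> cont_on a b W.
Proof.
intros HS HW x Hx. apply lim_within. intros eps Heps.
destruct (HW (eps / 3)%R) as [N HN]. lra.
destruct (proj1 (lim_within _ _ _ _) (HS N x Hx) (eps / 3)%R) as [del [Hdel H]]. lra.
exists del. split; auto. intros y Hy Hyx.
replace (W y - W x) with ((W y - S N y) + (S N y - S N x) + (S N x - W x)) by ring.
eapply Rle_lt_trans. apply Cmod_triangle.
eapply Rle_lt_trans. apply Rplus_le_compat_r. apply Cmod_triangle.
rewrite (Cmod_minus_sym (W y)).
assert (H1 := HN N y (le_n _) Hy). assert (H2 := HN N x (le_n _) Hx).
specialize (H y Hy Hyx). lra.
Qed.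

Lemma unif_shift S W : unif_cv_on a b S W -> unif_cv_on a b (fun N => S (Datatypes.S N)) W.
Proof.
intros H eps Heps. destruct (H eps Heps) as [N HN]. exists N. intros n x Hn Hx. apply HN; auto.
Qed.

Lemma cint_minus x0 f g x : I x0 -> I x -> cont_on a b f -> cont_on a b g ->
  cint x0 (fun s => f s - g s) x = cint x0 f x - cint x0 g x.
Proof.
intros H0 Hx Hf Hg.
rewrite (cint_ext a b x0 (fun s => f s - g s) (fun s => f s + Copp 1 * g s)); auto.
2:{ intros; ring. }
assert (Hg' : cont_on a b (fun s => Copp 1 * g s)) by (apply cont_mult; auto; apply cont_const).
rewrite (cint_plus a b Hab x0 f (fun s => Copp 1 * g s) x); auto.
rewrite (cint_Cmult a b Hab); auto. ring.
Qed.

Lemma limit_int x0 (c : C) (A : R -> C) (F G : nat -> R -> C) Wf Vg MA :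
  I x0 -> cont_on a b A -> (forall s, I s -> (Cmod (A s) <= MA)%R) ->
  (forall N, cont_on a b (G N)) -> cont_on a b Vg ->
  (forall N x, I x -> F N x = c + cint x0 (fun s => A s * G N s) x) ->
  unif_cv_on a b F Wf -> unif_cv_on a b G Vg ->
  forall x, I x -> Wf x = c + cint x0 (fun s => A s * Vg s) x.
Proof.
intros H0 HA HMA HG HV HF HFW HGV x Hx.
assert (HMA0 : (0 <= MA)%R) by (eapply Rle_trans; [apply Cmod_ge_0| apply (HMA x Hx)]).
assert (E : Wf x - (c + cint x0 (fun s => A s * Vg s) x) = 0); [|
  replace (Wf x) with ((Wf x - (c + cint x0 (fun s => A s * Vg s) x)) + (c + cint x0 (fun s => A s * Vg s) x)) by ring;
  rewrite E; ring].
apply Cmod_small_0. intros e He.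
set (e' := (e / (2 * ((b - a) * MA + 1)))%R).
assert (He' : (0 < e')%R).
{ unfold e'. apply Rdiv_lt_0_compat; auto. assert (0 <= (b - a) * MA)%R by (apply Rmult_le_pos; lra). lra. }
destruct (HFW (e / 2)%R) as [N1 HN1]. lra.
destruct (HGV e') as [N2 HN2]. auto.
set (N := Nat.max N1 N2).
specialize (HN1 N x ltac:(unfold N; lia) Hx).
rewrite <- (Cmod_minus_sym (Wf x)) in HN1.
replace (Wf x - (c + cint x0 (fun s => A s * Vg s) x)) with
   ((Wf x - F N x) + cint x0 (fun s => A s * (G N s - Vg s)) x).
2:{ rewrite (HF N x Hx).
    rewrite (cint_ext a b x0 (fun s => A s * (G N s - Vg s)) (fun s => A s * G N s - A s * Vg s)); auto. 2:{ intros; ring. }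
    rewrite cint_minus; auto. ring. apply cont_mult; auto. apply cont_mult; auto. }
eapply Rle_trans. apply Cmod_triangle.
assert (Hi : (Cmod (cint x0 (fun s => (A s * (G N s - Vg s))%C) x) <= (b - a) * MA * e')%R).
{ unfold cint. eapply Rle_trans. apply (RInt_bound a b Hab) with (M := (MA * e')%R); auto.
  - apply cont_mult; auto. apply cont_minus; auto.
  - intros s Hs. assert (Is : I s).
    { split. apply Rle_trans with (Rmin x0 x); [apply Rmin_glb; lra|]. lra.
      apply Rle_trans with (Rmax x0 x); [lra| apply Rmax_lub; lra]. }
    rewrite Cmod_mult. apply Rmult_le_compat; auto. apply Cmod_ge_0. apply Cmod_ge_0.
    left. apply HN2; auto. unfold N; lia.
  - rewrite <- Rmult_assoc. apply Rmult_le_compat_r. nra.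
    apply Rmult_le_compat_r; auto. unfold Rabs; destruct Rcase_abs; lra. }
assert (Hq : ((b - a) * MA * e' <= e / 2)%R).
{ unfold e'. assert (0 <= (b - a) * MA)%R by (apply Rmult_le_pos; lra).
  apply Rmult_le_reg_r with (2 * ((b - a) * MA + 1))%R. nra.
  replace ((b - a) * MA * (e / (2 * ((b - a) * MA + 1))) * (2 * ((b - a) * MA + 1)))%R
    with ((b - a) * MA * e)%R by (field; lra). nra. }
lra.
Qed.


Theorem picard x0 (A B : R -> C) (c1 c2 : C) (S D : nat -> R -> C) :
  I x0 -> cont_on a b A -> cont_on a b B ->
  (forall N, cont_on a b (S N)) -> (forall N, cont_on a b (D N)) ->
  (forall N x, I x -> S N x = c1 + cint x0 (fun s => A s * D N s) x) ->
  (forall N x, I x -> D (Datatypes.S N) x = c2 + cint x0 (fun s => B s * S N s) x) ->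
  exists W V, unif_cv_on a b S W /\ unif_cv_on a b D V /\ cont_on a b W /\ cont_on a b V /\
    (forall x, I x -> W x = c1 + cint x0 (fun s => A s * V s) x) /\
    (forall x, I x -> V x = c2 + cint x0 (fun s => B s * W s) x).
Proof.
intros H0 HA HB HS HD HSD HDS.
destruct (cont_bounded a b A Hab HA) as [MA HMA].
destruct (cont_bounded a b B Hab HB) as [MB HMB].
destruct (cont_bounded a b (fun x => D 1%nat x - D 0%nat x) Hab) as [K HK].
{ apply cont_minus; auto. }
set (M := (Rabs MA + Rabs MB)%R).
assert (HM0 : (0 <= M)%R) by (unfold M; generalize (Rabs_pos MA) (Rabs_pos MB); lra).
assert (HA' : forall s, I s -> (Cmod (A s) <= M)%R).
{ intros s Hs. eapply Rle_trans. apply HMA; auto. unfold M. generalize (Rle_abs MA) (Rabs_pos MB); lra. }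
assert (HB' : forall s, I s -> (Cmod (B s) <= M)%R).
{ intros s Hs. eapply Rle_trans. apply HMB; auto. unfold M. generalize (Rle_abs MB) (Rabs_pos MA); lra. }
assert (HK0 : (0 <= K)%R) by (eapply Rle_trans; [apply Cmod_ge_0| apply (HK x0 H0)]).
set (phi := fun (j : nat) (x : R) => (K * M ^ j * Rabs (x - x0) ^ j / INR (fact j))%R).
assert (Hstep : forall (Cf g : R -> C) j, cont_on a b Cf -> cont_on a b g ->
   (forall s, I s -> (Cmod (Cf s) <= M)%R) -> (forall s, I s -> (Cmod (g s) <= phi j s)%R) ->
   forall x, I x -> (Cmod (cint x0 (fun s => (Cf s * g s)%C) x) <= phi (Datatypes.S j) x)%R).
{ intros Cf g j HCf Hg HCM HgM x Hx.
  assert (Hf := INR_fact_neq_0 j).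
  assert (Hfp : (0 < INR (fact j))%R) by (apply lt_0_INR; apply lt_O_fact).
  eapply Rle_trans. apply (cint_pow_bound a b Hab x0 _ x (M * K * M ^ j / INR (fact j))%R j); auto.
  - apply cont_mult; auto.
  - intros s Hs. rewrite Cmod_mult.
    apply Rle_trans with (M * phi j s)%R.
    + apply Rmult_le_compat; auto; apply Cmod_ge_0.
    + unfold phi. right. field. auto.
  - right. unfold phi. rewrite fact_simpl, mult_INR. simpl pow.
    assert (INR (Datatypes.S j) <> 0)%R by (apply not_0_INR; lia). field. split; auto. }
assert (HSinc : forall k, (forall s, I s -> (Cmod (D (Datatypes.S k) s - D k s)%C <= phi (2 * k)%nat s)%R) ->
   forall x, I x -> (Cmod (S (Datatypes.S k) x - S k x)%C <= phi (Datatypes.S (2 * k)) x)%R).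
{ intros k Hk x Hx.
  assert (E : S (Datatypes.S k) x - S k x = cint x0 (fun s => A s * (D (Datatypes.S k) s - D k s)) x).
  { rewrite !HSD by auto. rewrite (cint_ext a b x0 (fun s => A s * (D (Datatypes.S k) s - D k s))
         (fun s => A s * D (Datatypes.S k) s - A s * D k s)); auto. 2:{ intros; ring. }
    rewrite cint_minus; auto. ring. apply cont_mult; auto. apply cont_mult; auto. }
  rewrite E. apply Hstep; auto. apply cont_minus; auto. }
assert (HDinc : forall k, (forall s, I s -> (Cmod (S (Datatypes.S k) s - S k s)%C <= phi (Datatypes.S (2 * k)) s)%R) ->
   forall x, I x -> (Cmod (D (Datatypes.S (Datatypes.S k)) x - D (Datatypes.S k) x)%C <= phi (2 * Datatypes.S k)%nat x)%R).
{ intros k Hk x Hx.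
  assert (E : D (Datatypes.S (Datatypes.S k)) x - D (Datatypes.S k) x = cint x0 (fun s => B s * (S (Datatypes.S k) s - S k s)) x).
  { rewrite !HDS by auto. rewrite (cint_ext a b x0 (fun s => B s * (S (Datatypes.S k) s - S k s))
         (fun s => B s * S (Datatypes.S k) s - B s * S k s)); auto. 2:{ intros; ring. }
    rewrite cint_minus; auto. ring. apply cont_mult; auto. apply cont_mult; auto. }
  rewrite E. replace (2 * Datatypes.S k)%nat with (Datatypes.S (Datatypes.S (2 * k))) by lia.
  apply Hstep; auto. apply cont_minus; auto. }
assert (HDall : forall k x, I x -> (Cmod (D (Datatypes.S k) x - D k x)%C <= phi (2 * k)%nat x)%R).
{ induction k; intros x Hx.
  - unfold phi. simpl. replace (K * 1 * 1 / 1)%R with K by field. apply HK; auto.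
  - apply HDinc; auto. }
assert (HSall : forall k x, I x -> (Cmod (S (Datatypes.S k) x - S k x)%C <= phi (Datatypes.S (2 * k)) x)%R).
{ intros k. apply HSinc. intros s Hs. apply HDall; auto. }
set (z := (M * (b - a))%R).
assert (Hz : (0 <= z)%R) by (unfold z; apply Rmult_le_pos; lra).
set (g := fun j : nat => (z ^ j / INR (fact j))%R).
assert (Hg0 : forall j, (0 <= g j)%R).
{ intros j. unfold g. apply Rmult_le_pos. apply pow_le; auto. left; apply Rinv_0_lt_compat, lt_0_INR, lt_O_fact. }
assert (Hphi : forall j x, I x -> (phi j x <= K * g j)%R).
{ intros j x Hx. unfold phi, g. unfold Rdiv.
  replace (K * M ^ j * Rabs (x - x0) ^ j * / INR (fact j))%R with
    (K * ((M * Rabs (x - x0)) ^ j * / INR (fact j)))%R by (rewrite Rpow_mult_distr; ring).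
  apply Rmult_le_compat_l; auto. apply Rmult_le_compat_r.
  left; apply Rinv_0_lt_compat, lt_0_INR, lt_O_fact.
  apply pow_incr. split.
  apply Rmult_le_pos; auto; apply Rabs_pos.
  unfold z. apply Rmult_le_compat_l; auto. unfold Rabs; destruct Rcase_abs; lra. }
set (h := fun k => (K * (g (2 * k)%nat + g (Datatypes.S (2 * k))))%R).
assert (Hh0 : forall k, (0 <= h k)%R).
{ intros k. unfold h. apply Rmult_le_pos; auto. generalize (Hg0 (2 * k)%nat) (Hg0 (Datatypes.S (2 * k))); lra. }
assert (Hrs : forall N, rsum h (Datatypes.S N) = (K * sum_f_R0 g (Datatypes.S (2 * N)))%R).
{ induction N.
  - simpl. unfold h. simpl. ring.
  - change (rsum h (Datatypes.S (Datatypes.S N))) with (rsum h (Datatypes.S N) + h (Datatypes.S N))%R.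
    rewrite IHN. replace (Datatypes.S (2 * Datatypes.S N)) with (Datatypes.S (Datatypes.S (Datatypes.S (2 * N)))) by lia.
    unfold h. replace (2 * Datatypes.S N)%nat with (Datatypes.S (Datatypes.S (2 * N))) by lia.
    generalize (2 * N)%nat. intros m.
    change (sum_f_R0 g (Datatypes.S (Datatypes.S (Datatypes.S m)))) with
      (sum_f_R0 g (Datatypes.S m) + g (Datatypes.S (Datatypes.S m)) + g (Datatypes.S (Datatypes.S (Datatypes.S m))))%R.
    ring. }
assert (Hub : forall N, (rsum h N <= K * exp z)%R).
{ intros N. apply Rle_trans with (rsum h (Datatypes.S N)).
  simpl. generalize (Hh0 N); lra.
  rewrite Hrs. apply Rmult_le_compat_l; auto. apply exp_ge_taylor; auto. }
destruct (growing_cv (rsum h)) as [l Hl].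
{ intros n. simpl. generalize (Hh0 n); lra. }
{ exists (K * exp z)%R. intros r [i ->]. apply Hub. }
destruct (unif_from_cauchy a b S h l Hh0 Hl) as [W HW].
{ intros k x Hx. eapply Rle_trans. apply HSall; auto. eapply Rle_trans. apply Hphi; auto.
  unfold h. generalize (Hg0 (2 * k)%nat); nra. }
destruct (unif_from_cauchy a b D h l Hh0 Hl) as [V HV].
{ intros k x Hx. eapply Rle_trans. apply HDall; auto. eapply Rle_trans. apply Hphi; auto.
  unfold h. generalize (Hg0 (Datatypes.S (2 * k))); nra. }
assert (HWc : cont_on a b W) by (apply (unif_cont S); auto).
assert (HVc : cont_on a b V) by (apply (unif_cont D); auto).
exists W, V. repeat split; auto.
- apply (limit_int x0 c1 A S D W V M); auto.
- apply (limit_int x0 c2 B (fun N => D (Datatypes.S N)) S V W M); auto.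
  apply unif_shift; auto.
Qed.

End Picard.


Lemma fold_Zadd_init (l : list Z) c : fold_right Z.add c l = (fold_right Z.add 0 l + c)%Z.
Proof. induction l; simpl; lia. Qed.
Lemma fold_Nadd_init (l : list nat) c : fold_right Nat.add c l = (fold_right Nat.add 0 l + c)%nat.
Proof. induction l; simpl; lia. Qed.

Lemma zsize_S d j : zsize (S d) j = (zsize d j + j d)%Z.
Proof. unfold zsize. rewrite seq_S, map_app, fold_right_app. simpl. rewrite fold_Zadd_init. lia. Qed.
Lemma nsize_S d n : nsize (S d) n = (nsize d n + n d)%nat.
Proof. unfold nsize. rewrite seq_S, map_app, fold_right_app. simpl. rewrite fold_Nadd_init. lia. Qed.
Lemma zsize_0 j : zsize 0 j = 0%Z.
Proof. reflexivity. Qed.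
Lemma nsize_0 n : nsize 0 n = 0%nat.
Proof. reflexivity. Qed.

Lemma nsize_ncons d a n : nsize (S d) (ncons a n) = (a + nsize d n)%nat.
Proof.
induction d.
- reflexivity.
- rewrite nsize_S, IHd, nsize_S. simpl. lia.
Qed.

Lemma zsize_ext d j k : (forall l, (l < d)%nat -> j l = k l) -> zsize d j = zsize d k.
Proof.
induction d; intros H. reflexivity.
rewrite !zsize_S, IHd, H; auto; intros; apply H; lia.
Qed.

Lemma nsize_ext d n m : (forall l, (l < d)%nat -> n l = m l) -> nsize d n = nsize d m.
Proof.
induction d; intros H. reflexivity.
rewrite !nsize_S, IHd, H; auto; intros; apply H; lia.
Qed.

Lemma zsize_twice d n : zsize d (twice n) = (2 * Z.of_nat (nsize d n))%Z.
Proof. induction d. reflexivity. rewrite zsize_S, nsize_S, IHd. unfold twice. lia. Qed.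

Lemma zsize_sub d j k : zsize d (zsub j k) = (zsize d j - zsize d k)%Z.
Proof. induction d. reflexivity. rewrite !zsize_S, IHd. unfold zsub. lia. Qed.

Lemma zsize_zero d j : (forall l, (l < d)%nat -> j l = 0%Z) -> zsize d j = 0%Z.
Proof. induction d; intros H. reflexivity. rewrite zsize_S, IHd, H; auto; intros; apply H; lia. Qed.

Lemma zsize_delta d i : (i < d)%nat -> zsize d (zdelta i) = 1%Z.
Proof.
induction d; intros H. lia.
rewrite zsize_S. destruct (Nat.eq_dec i d).
- subst. rewrite zsize_zero. unfold zdelta. rewrite Nat.eqb_refl. lia.
  intros l Hl. unfold zdelta. destruct (Nat.eqb_spec l d); lia.
- rewrite IHd by lia. unfold zdelta. destruct (Nat.eqb_spec d i); lia.
Qed.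

Lemma nsize_zero d n : nsize d n = 0%nat -> forall l, (l < d)%nat -> n l = 0%nat.
Proof.
induction d; intros H l Hl. lia. rewrite nsize_S in H.
destruct (Nat.eq_dec l d). subst; lia. apply IHd; lia.
Qed.

Lemma nsize_ge d n l : (l < d)%nat -> (n l <= nsize d n)%nat.
Proof.
induction d; intros Hl. lia. rewrite nsize_S.
destruct (Nat.eq_dec l d). subst; lia. specialize (IHd ltac:(lia)). lia.
Qed.

Lemma nsize_pos d n : nsize d n <> 0%nat -> exists l, (l < d)%nat /\ n l <> 0%nat.
Proof.
induction d; intros H. rewrite nsize_0 in H. lia. rewrite nsize_S in H.
destruct (Nat.eq_dec (n d) 0). destruct IHd as [l [Hl1 Hl2]]. lia. exists l; split; auto.
exists d; split; auto.
Qed.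

Lemma has_neg_true d j : has_neg d j = true <-> exists l, (l < d)%nat /\ (j l < 0)%Z.
Proof.
unfold has_neg. rewrite existsb_exists. split.
- intros [l [H1 H2]]. apply in_seq in H1. exists l. split. lia. apply Z.ltb_lt; auto.
- intros [l [H1 H2]]. exists l. split. apply in_seq; lia. apply Z.ltb_lt; auto.
Qed.

Lemma has_neg_false d j : (forall l, (l < d)%nat -> (0 <= j l)%Z) -> has_neg d j = false.
Proof.
intros H. destruct (has_neg d j) eqn:E; auto. apply has_neg_true in E.
destruct E as [l [H1 H2]]. specialize (H l H1). lia.
Qed.

Lemma all_zero_true d j : all_zero d j = true <-> forall l, (l < d)%nat -> j l = 0%Z.
Proof.
unfold all_zero. rewrite forallb_forall. split.
- intros H l Hl. apply Z.eqb_eq. apply H. apply in_seq; lia.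
- intros H l Hl. apply in_seq in Hl. apply Z.eqb_eq. apply H; lia.
Qed.

Lemma all_zero_false d j l : (l < d)%nat -> j l <> 0%Z -> all_zero d j = false.
Proof.
intros Hl Hj. destruct (all_zero d j) eqn:E; auto. rewrite all_zero_true in E.
exfalso. apply Hj. apply E; auto.
Qed.

Lemma is_minus_delta_true d m : is_minus_delta d m = true <->
  exists i, (i < d)%nat /\ forall l, (l < d)%nat -> m l = (if Nat.eqb l i then (-1)%Z else 0%Z).
Proof.
unfold is_minus_delta. rewrite existsb_exists. split.
- intros [i [H1 H2]]. apply in_seq in H1. exists i. split. lia.
  rewrite forallb_forall in H2. intros l Hl. apply Z.eqb_eq. apply H2. apply in_seq; lia.
- intros [i [H1 H2]]. exists i. split. apply in_seq; lia.
  rewrite forallb_forall. intros l Hl. apply in_seq in Hl. apply Z.eqb_eq. apply H2. lia.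
Qed.

Lemma is_minus_delta_false d m : (forall l, (l < d)%nat -> (0 <= m l)%Z) -> is_minus_delta d m = false.
Proof.
intros H. destruct (is_minus_delta d m) eqn:E; auto. apply is_minus_delta_true in E.
destruct E as [i [H1 H2]]. specialize (H2 i H1). rewrite Nat.eqb_refl in H2. specialize (H i H1). lia.
Qed.

Lemma filter_seq_nil (f : nat -> bool) s len :
  (forall l, (s <= l < s + len)%nat -> f l = false) -> filter f (seq s len) = nil.
Proof.
revert s. induction len; intros s H. reflexivity.
simpl. rewrite H by lia. apply IHlen. intros; apply H; lia.
Qed.

Lemma filter_seq_one (f : nat -> bool) s len i : (s <= i < s + len)%nat ->
  (forall l, (s <= l < s + len)%nat -> f l = Nat.eqb l i) -> filter f (seq s len) = i :: nil.
Proof.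
revert s. induction len; intros s Hi H. lia.
simpl. rewrite H by lia. destruct (Nat.eqb_spec s i).
- subst. f_equal. apply filter_seq_nil. intros l Hl. rewrite H by lia. apply Nat.eqb_neq. lia.
- apply IHlen. lia. intros; apply H; lia.
Qed.

Lemma odd_entries_in d j i : In i (odd_entries d j) -> (i < d)%nat.
Proof. unfold odd_entries. intros H. apply filter_In in H. destruct H as [H _]. apply in_seq in H. lia. Qed.

Definition dec (i : nat) (n : nat -> nat) : nat -> nat :=
  fun l => if Nat.eqb l i then (n l - 1)%nat else n l.

Lemma twice_dec i n : (1 <= n i)%nat -> zsub (zsub (twice n) (zdelta i)) (zdelta i) = twice (dec i n).
Proof.
intros H. apply functional_extensionality. intros l. unfold zsub, twice, zdelta, dec.
destruct (Nat.eqb_spec l i). subst. lia. lia.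
Qed.

Lemma nsize_dec d i n : (i < d)%nat -> (1 <= n i)%nat -> nsize d (dec i n) = (nsize d n - 1)%nat.
Proof.
intros Hi Hn.
assert (E := zsize_twice d (dec i n)). rewrite <- twice_dec in E by auto.
rewrite !zsize_sub, zsize_twice, zsize_delta in E by auto.
assert (Hge := nsize_ge d n i Hi). lia.
Qed.

Lemma odd_twice d n : odd_entries d (twice n) = nil.
Proof.
unfold odd_entries. apply filter_seq_nil. intros l _. unfold twice.
rewrite Z.odd_mul. reflexivity.
Qed.

Lemma odd_twice_delta d n i : (i < d)%nat -> odd_entries d (zsub (twice n) (zdelta i)) = i :: nil.
Proof.
intros Hi. unfold odd_entries. apply filter_seq_one. lia.
intros l _. unfold zsub, twice, zdelta. destruct (Nat.eqb_spec l i).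
- rewrite Z.odd_sub, Z.odd_mul. reflexivity.
- rewrite Z.sub_0_r, Z.odd_mul. reflexivity.
Qed.


Lemma csum_ext (f g : nat -> C) n : (forall i, (i < n)%nat -> f i = g i) -> csum f n = csum g n.
Proof. induction n; intros H; simpl. auto. rewrite IHn, H; auto; intros; apply H; lia. Qed.

Lemma csum_plus (f g : nat -> C) n : csum (fun i => f i + g i) n = csum f n + csum g n.
Proof. induction n; simpl. ring. rewrite IHn. ring. Qed.

Lemma csum_mult_l (c : C) (f : nat -> C) n : csum (fun i => c * f i) n = c * csum f n.
Proof. induction n; simpl. ring. rewrite IHn. ring. Qed.

Lemma csum_zero n : csum (fun _ => 0) n = 0.
Proof. induction n; simpl. auto. rewrite IHn. ring. Qed.

Lemma csum_shift (f : nat -> C) n : csum f (S n) = f 0%nat + csum (fun i => f (S i)) n.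
Proof. induction n; simpl in *. ring. rewrite IHn. ring. Qed.

Lemma csum_const (c : C) n : csum (fun _ => c) n = RtoC (INR n) * c.
Proof.
induction n; simpl csum. rewrite Cmult_0_l. reflexivity.
rewrite IHn. rewrite S_INR. rewrite RtoC_plus. ring.
Qed.

Lemma csum_swap (F : nat -> nat -> C) n m :
  csum (fun i => csum (fun j => F i j) m) n = csum (fun j => csum (fun i => F i j) n) m.
Proof.
induction n; simpl.
- rewrite csum_zero. auto.
- rewrite IHn. rewrite <- csum_plus. reflexivity.
Qed.

Lemma msum_plus d N (F G : (nat -> nat) -> C) : msum_le d N (fun n => F n + G n) = msum_le d N F + msum_le d N G.
Proof.
revert N F G. induction d; intros N F G; cbn [msum_le]. auto.
rewrite <- (csum_plus (fun a => msum_le d (N - a) (fun n => F (ncons a n))) (fun a => msum_le d (N - a) (fun n => G (ncons a n)))).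
apply csum_ext. intros a _. apply IHd.
Qed.

Lemma msum_mult_l d N (c : C) (F : (nat -> nat) -> C) : msum_le d N (fun n => c * F n) = c * msum_le d N F.
Proof.
revert N F. induction d; intros N F; cbn [msum_le]. auto.
rewrite <- (csum_mult_l c (fun a => msum_le d (N - a) (fun n => F (ncons a n)))). apply csum_ext. intros a _. apply IHd.
Qed.

Lemma msum_zero d N : msum_le d N (fun _ => 0) = 0.
Proof.
revert N. induction d; intros N; cbn [msum_le]. auto.
transitivity (csum (fun _ => 0) (S N)). apply csum_ext. intros a _. apply IHd. apply csum_zero.
Qed.

Lemma msum_ext d N (F G : (nat -> nat) -> C) : (forall n, F n = G n) -> msum_le d N F = msum_le d N G.
Proof. intros H. f_equal. apply functional_extensionality. auto. Qed.

Lemma msum_csum d N (F : nat -> (nat -> nat) -> C) k :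
  msum_le d N (fun n => csum (fun i => F i n) k) = csum (fun i => msum_le d N (F i)) k.
Proof.
induction k; simpl. apply msum_zero.
rewrite msum_plus, IHk. reflexivity.
Qed.

Lemma ncons_zero : ncons 0 (fun _ => 0%nat) = (fun _ => 0%nat).
Proof. apply functional_extensionality. intros [|l]; reflexivity. Qed.

Lemma msum_0N d (F : (nat -> nat) -> C) : msum_le d 0 F = F (fun _ => 0%nat).
Proof.
revert F. induction d; intros F. reflexivity.
simpl. rewrite IHd. rewrite ncons_zero. ring.
Qed.

Lemma msum_only0 d N (F : (nat -> nat) -> C) : (forall n, nsize d n <> 0%nat -> F n = 0) -> msum_le d N F = F (fun _ => 0%nat).
Proof.
revert N F. induction d; intros N F H. reflexivity.
cbn [msum_le]. rewrite csum_shift.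
rewrite IHd. 2:{ intros n Hn. apply H. rewrite nsize_ncons. lia. }
rewrite ncons_zero.
rewrite (csum_ext _ (fun _ => 0)). rewrite csum_zero. ring.
intros a _. rewrite <- (msum_zero d (N - S a)). apply msum_ext. intros n. apply H.
rewrite nsize_ncons. lia.
Qed.

Lemma dec_ncons0 a n : dec 0 (ncons a n) = ncons (a - 1) n.
Proof. apply functional_extensionality. intros [|l]; reflexivity. Qed.

Lemma dec_nconsS i a n : dec (S i) (ncons a n) = ncons a (dec i n).
Proof. apply functional_extensionality. intros [|l]; reflexivity. Qed.

Lemma msum_reindex d i N (G : (nat -> nat) -> C) : (i < d)%nat ->
  msum_le d (S N) (fun n => if Nat.leb 1 (n i) then G (dec i n) else 0) = msum_le d N G.
Proof.
revert i N G. induction d; intros i N G Hi. lia.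
cbn [msum_le]. destruct i as [|i].
- rewrite csum_shift. simpl ncons at 1.
  rewrite msum_zero.
  rewrite Cplus_0_l. apply csum_ext. intros a Ha.
  apply msum_ext. intros n. simpl. rewrite dec_ncons0. f_equal. f_equal. lia.
- change (csum (fun a => msum_le d (S N - a) (fun n => if Nat.leb 1 (ncons a n (S i)) then G (dec (S i) (ncons a n)) else 0)) (S (S N)))
    with (csum (fun a => msum_le d (S N - a) (fun n => if Nat.leb 1 (ncons a n (S i)) then G (dec (S i) (ncons a n)) else 0)) (S N)
          + msum_le d (S N - S N) (fun n => if Nat.leb 1 (ncons (S N) n (S i)) then G (dec (S i) (ncons (S N) n)) else 0)).
  rewrite Nat.sub_diag, msum_0N. simpl ncons. simpl Nat.leb. rewrite Cplus_0_r.
  apply csum_ext. intros a Ha. replace (S N - a)%nat with (S (N - a)) by lia.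
  simpl ncons. rewrite <- (IHd i (N - a)%nat (fun n => G (ncons a n))) by lia.
  apply msum_ext. intros n. rewrite dec_nconsS. reflexivity.
Qed.


Section FP.
Variables (d : nat) (x0 : R) (p u0 : R -> C) (r : nat -> R -> C).

Notation Xt := (Xt d x0 p u0 r).
Notation X := (X d x0 p u0 r).

Lemma twice_nonneg n l : (0 <= twice n l)%Z.
Proof. unfold twice. lia. Qed.

Lemma XtA n : nsize d n <> 0%nat ->
  Xt (twice n) = fun x => zC (2 * Z.of_nat (nsize d n)) *
    cint x0 (fun s => / (p s * u0 s * u0 s) * csum (fun i => Xt (zsub (twice n) (zdelta i)) s) d) x.
Proof.
intros Hn. unfold Defs.Xt at 1.
replace (Z.to_nat (zsize d (twice n))) with (S (2 * nsize d n - 1)) by (rewrite zsize_twice; lia).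
cbn [Xt_f].
rewrite has_neg_false by (intros; apply twice_nonneg).
destruct (nsize_pos d n Hn) as [l [Hl Hl2]].
rewrite (all_zero_false d _ l) by (auto; unfold twice; lia).
rewrite odd_twice. rewrite zsize_twice.
apply functional_extensionality. intros x. f_equal. f_equal.
apply functional_extensionality. intros s. f_equal.
apply csum_ext. intros i Hi. unfold Defs.Xt.
f_equal. rewrite zsize_sub, zsize_twice, zsize_delta by auto. lia.
Qed.

Lemma XtA0 n : nsize d n = 0%nat -> Xt (twice n) = fun _ => 1.
Proof.
intros Hn. unfold Defs.Xt.
replace (Z.to_nat (zsize d (twice n))) with 0%nat by (rewrite zsize_twice; lia).
cbn [Xt_f].
rewrite has_neg_false by (intros; apply twice_nonneg).
replace (all_zero d (twice n)) with true; auto.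
symmetry. apply all_zero_true. intros l Hl. unfold twice. rewrite (nsize_zero d n Hn l Hl). lia.
Qed.

Lemma entry_td n i l : zsub (twice n) (zdelta i) l = (2 * Z.of_nat (n l) - (if Nat.eqb l i then 1 else 0))%Z.
Proof. reflexivity. Qed.

Lemma XtB n i : (i < d)%nat -> (1 <= n i)%nat ->
  Xt (zsub (twice n) (zdelta i)) = fun x => zC (2 * Z.of_nat (nsize d n) - 1) *
    cint x0 (fun s => r i s * u0 s * u0 s * Xt (twice (dec i n)) s) x.
Proof.
intros Hi Hn. assert (Hge := nsize_ge d n i Hi).
unfold Defs.Xt at 1.
replace (Z.to_nat (zsize d (zsub (twice n) (zdelta i)))) with (S (2 * nsize d n - 2))
  by (rewrite zsize_sub, zsize_twice, zsize_delta by auto; lia).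
cbn [Xt_f].
rewrite has_neg_false.
2:{ intros l Hl. rewrite entry_td. destruct (Nat.eqb_spec l i); subst; lia. }
rewrite (all_zero_false d _ i) by (auto; rewrite entry_td, Nat.eqb_refl; lia).
rewrite odd_twice_delta by auto.
rewrite twice_dec by auto.
rewrite zsize_sub, zsize_twice, zsize_delta by auto.
apply functional_extensionality. intros x. f_equal. f_equal.
apply functional_extensionality. intros s. f_equal.
unfold Defs.Xt. f_equal. rewrite zsize_twice, nsize_dec by auto. lia.
Qed.

Lemma XtB0 n i : (i < d)%nat -> n i = 0%nat -> Xt (zsub (twice n) (zdelta i)) = fun _ => 0.
Proof.
intros Hi Hn. unfold Defs.Xt.
assert (Hneg : has_neg d (zsub (twice n) (zdelta i)) = true).
{ apply has_neg_true. exists i. split; auto. rewrite entry_td, Nat.eqb_refl, Hn. lia. }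
destruct (Z.to_nat (zsize d (zsub (twice n) (zdelta i)))); cbn [Xt_f]; rewrite Hneg; reflexivity.
Qed.

Lemma XA n :
  X (twice n) = fun x => zC (2 * Z.of_nat (nsize d n) + 1) *
    cint x0 (fun s => / (p s * u0 s * u0 s) * csum (fun i => X (zsub (twice n) (zdelta i)) s) d) x.
Proof.
unfold Defs.X at 1.
replace (Z.to_nat (zsize d (twice n) + 1)) with (S (2 * nsize d n)) by (rewrite zsize_twice; lia).
cbn [X_f].
rewrite is_minus_delta_false by (intros; apply twice_nonneg).
rewrite has_neg_false by (intros; apply twice_nonneg).
rewrite odd_twice. rewrite zsize_twice.
apply functional_extensionality. intros x. f_equal. f_equal.
apply functional_extensionality. intros s. f_equal.
apply csum_ext. intros i Hi. unfold Defs.X.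
f_equal. rewrite zsize_sub, zsize_twice, zsize_delta by auto. lia.
Qed.

Lemma XB n i : (i < d)%nat -> (1 <= n i)%nat ->
  X (zsub (twice n) (zdelta i)) = fun x => zC (2 * Z.of_nat (nsize d n)) *
    cint x0 (fun s => r i s * u0 s * u0 s * X (twice (dec i n)) s) x.
Proof.
intros Hi Hn. assert (Hge := nsize_ge d n i Hi).
unfold Defs.X at 1.
replace (Z.to_nat (zsize d (zsub (twice n) (zdelta i)) + 1)) with (S (2 * nsize d n - 1))
  by (rewrite zsize_sub, zsize_twice, zsize_delta by auto; lia).
cbn [X_f].
rewrite is_minus_delta_false.
2:{ intros l Hl. rewrite entry_td. destruct (Nat.eqb_spec l i); subst; lia. }
rewrite has_neg_false.
2:{ intros l Hl. rewrite entry_td. destruct (Nat.eqb_spec l i); subst; lia. }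
rewrite odd_twice_delta by auto.
rewrite twice_dec by auto.
rewrite zsize_sub, zsize_twice, zsize_delta by auto.
replace (2 * Z.of_nat (nsize d n) - 1 + 1)%Z with (2 * Z.of_nat (nsize d n))%Z by lia.
apply functional_extensionality. intros x. f_equal. f_equal.
apply functional_extensionality. intros s. f_equal.
unfold Defs.X. f_equal. rewrite zsize_twice, nsize_dec by auto. lia.
Qed.

Lemma XB0 n i : (i < d)%nat -> nsize d n = 0%nat ->
  X (zsub (twice n) (zdelta i)) = fun _ => / RtoC (INR d).
Proof.
intros Hi Hn. unfold Defs.X.
assert (Hm : is_minus_delta d (zsub (twice n) (zdelta i)) = true).
{ apply is_minus_delta_true. exists i. split; auto. intros l Hl. rewrite entry_td.
  rewrite (nsize_zero d n Hn l Hl). destruct (Nat.eqb l i); lia. }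
destruct (Z.to_nat (zsize d (zsub (twice n) (zdelta i)) + 1)); cbn [X_f]; rewrite Hm; reflexivity.
Qed.

Lemma XB1 n i : (i < d)%nat -> n i = 0%nat -> nsize d n <> 0%nat ->
  X (zsub (twice n) (zdelta i)) = fun _ => 0.
Proof.
intros Hi Hn Hs. unfold Defs.X.
assert (Hm : is_minus_delta d (zsub (twice n) (zdelta i)) = false).
{ destruct (is_minus_delta d (zsub (twice n) (zdelta i))) eqn:E; auto.
  apply is_minus_delta_true in E. destruct E as [i' [Hi' H]].
  destruct (nsize_pos d n Hs) as [l0 [Hl0 Hl0']].
  specialize (H l0 Hl0). rewrite entry_td in H.
  destruct (Nat.eqb_spec l0 i); [subst; lia|]. destruct (Nat.eqb l0 i'); lia. }
assert (Hneg : has_neg d (zsub (twice n) (zdelta i)) = true).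
{ apply has_neg_true. exists i. split; auto. rewrite entry_td, Nat.eqb_refl, Hn. lia. }
destruct (Z.to_nat (zsize d (zsub (twice n) (zdelta i)) + 1)); cbn [X_f]; rewrite Hm, Hneg; reflexivity.
Qed.

Variables a b : R.
Hypothesis Hab : (a < b)%R.
Hypothesis H0 : (a <= x0 <= b)%R.
Hypothesis Hp : cont_on a b p.
Hypothesis Hu0 : cont_on a b u0.
Hypothesis Hr : forall i, (i < d)%nat -> cont_on a b (r i).
Hypothesis Hp0 : forall x, (a <= x <= b)%R -> p x <> 0.
Hypothesis Hu00 : forall x, (a <= x <= b)%R -> u0 x <> 0.

Lemma cont_coef : cont_on a b (fun s => / (p s * u0 s * u0 s)).
Proof.
apply cont_inv. apply cont_mult. apply cont_mult; auto. auto.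
intros x Hx. apply Cmult_neq_0. apply Cmult_neq_0; auto. auto.
Qed.

Lemma cont_Xt_f k j : cont_on a b (Xt_f d x0 p u0 r k j).
Proof.
revert j. induction k; intros j; cbn [Xt_f].
- destruct (has_neg d j); [apply cont_const|]. destruct (all_zero d j); apply cont_const.
- destruct (has_neg d j); [apply cont_const|]. destruct (all_zero d j); [apply cont_const|].
  destruct (odd_entries d j) as [|i [|i' l]] eqn:E.
  + apply cont_mult. apply cont_const. apply cont_cint; auto.
    apply cont_mult. apply cont_coef. apply (cont_csum a b (fun i => Xt_f d x0 p u0 r k (zsub j (zdelta i)))).
    intros; apply IHk.
  + assert (Hi : (i < d)%nat) by (apply (odd_entries_in d j); rewrite E; left; auto).
    apply cont_mult. apply cont_const. apply cont_cint; auto.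
    apply cont_mult. apply cont_mult. apply cont_mult; auto. auto. apply IHk.
  + apply cont_const.
Qed.

Lemma cont_X_f k j : cont_on a b (X_f d x0 p u0 r k j).
Proof.
revert j. induction k; intros j; cbn [X_f].
- destruct (is_minus_delta d j); [apply cont_const|]. destruct (has_neg d j); apply cont_const.
- destruct (is_minus_delta d j); [apply cont_const|]. destruct (has_neg d j); [apply cont_const|].
  destruct (odd_entries d j) as [|i [|i' l]] eqn:E.
  + apply cont_mult. apply cont_const. apply cont_cint; auto.
    apply cont_mult. apply cont_coef. apply (cont_csum a b (fun i => X_f d x0 p u0 r k (zsub j (zdelta i)))).
    intros; apply IHk.
  + assert (Hi : (i < d)%nat) by (apply (odd_entries_in d j); rewrite E; left; auto).
    apply cont_mult. apply cont_const. apply cont_cint; auto.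
    apply cont_mult. apply cont_mult. apply cont_mult; auto. auto. apply IHk.
  + apply cont_const.
Qed.

Lemma cont_Xt j : cont_on a b (Xt j).
Proof. apply cont_Xt_f. Qed.
Lemma cont_X j : cont_on a b (X j).
Proof. apply cont_X_f. Qed.

End FP.


Lemma RtoC_nz (x : R) : x <> 0%R -> RtoC x <> 0.
Proof. intros H E. apply H. apply RtoC_inj. exact E. Qed.

Lemma cfact_nz k : cfact k <> 0.
Proof. unfold cfact. apply RtoC_nz. apply INR_fact_neq_0. Qed.

Lemma zC_nat k : zC (Z.of_nat k) = RtoC (INR k).
Proof. unfold zC. rewrite <- INR_IZR_INZ. reflexivity. Qed.

Lemma zC_fact k : (1 <= k)%nat -> zC (Z.of_nat k) / cfact k = / cfact (k - 1).
Proof.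
intros Hk. rewrite zC_nat. unfold cfact.
replace k with (S (k - 1)) at 2 by lia. rewrite fact_simpl, mult_INR, RtoC_mult.
replace (S (k - 1)) with k by lia.
assert (H1 : RtoC (INR k) <> 0) by (apply RtoC_nz, not_0_INR; lia).
assert (H2 : RtoC (INR (fact (k - 1))) <> 0) by (apply RtoC_nz, INR_fact_neq_0).
field. auto.
Qed.



Lemma cprod_ext (f g : nat -> C) n : (forall l, (l < n)%nat -> f l = g l) -> cprod f n = cprod g n.
Proof. induction n; intros H; simpl. auto. rewrite IHn, H; auto; intros; apply H; lia. Qed.

Lemma cprod_one_change (f g : nat -> C) (c : C) i n : (i < n)%nat ->
  (forall l, (l < n)%nat -> l <> i -> f l = g l) -> f i = c * g i ->
  cprod f n = c * cprod g n.
Proof.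
induction n; intros Hi H Hfi. lia. simpl.
destruct (Nat.eq_dec i n).
- subst. rewrite Hfi. rewrite (cprod_ext f g). ring. intros; apply H; lia.
- rewrite IHn; [| lia | intros; apply H; lia | auto]. rewrite H by lia. ring.
Qed.

Lemma cprod_ones (f : nat -> C) n : (forall l, (l < n)%nat -> f l = 1) -> cprod f n = 1.
Proof. induction n; intros H; simpl. auto. rewrite IHn, H; auto. ring. Qed.

Lemma mpow_dec d lam n i : (i < d)%nat -> (1 <= n i)%nat -> mpow d lam n = lam i * mpow d lam (dec i n).
Proof.
intros Hi Hn. unfold mpow. apply cprod_one_change with i; auto.
- intros l Hl Hli. unfold dec. apply Nat.eqb_neq in Hli. rewrite Hli. reflexivity.
- unfold dec. rewrite Nat.eqb_refl. destruct (n i) as [|k]. lia. simpl. replace (k - 0)%nat with k by lia. reflexivity.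
Qed.

Lemma mpow_zero d lam n : nsize d n = 0%nat -> mpow d lam n = 1.
Proof.
intros Hn. unfold mpow. apply cprod_ones. intros l Hl. rewrite (nsize_zero d n Hn l Hl). reflexivity.
Qed.

Section MsumAn.
Variables a b : R.
Hypothesis Hab : (a < b)%R.

Lemma cont_msum d N (F : (nat -> nat) -> R -> C) : (forall n, cont_on a b (F n)) ->
  cont_on a b (fun x => msum_le d N (fun n => F n x)).
Proof.
revert N F. induction d; intros N F H; cbn [msum_le]. apply H.
apply (cont_csum a b (fun a0 x => msum_le d (N - a0) (fun n => F (ncons a0 n) x))).
intros i _. apply (IHd (N - i)%nat (fun n => F (ncons i n))). intros; apply H.
Qed.

Lemma cint_msum x0 d N (F : (nat -> nat) -> R -> C) x : (a <= x0 <= b)%R -> (a <= x <= b)%R ->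
  (forall n, cont_on a b (F n)) ->
  cint x0 (fun s => msum_le d N (fun n => F n s)) x = msum_le d N (fun n => cint x0 (F n) x).
Proof.
intros H0 Hx. revert N F. induction d; intros N F H; cbn [msum_le]. reflexivity.
rewrite (cint_csum a b Hab x0 (fun a0 s => msum_le d (N - a0) (fun n => F (ncons a0 n) s))); auto.
- apply csum_ext. intros i _. apply (IHd (N - i)%nat (fun n => F (ncons i n))). intros; apply H.
- intros i _. apply (cont_msum d (N - i)%nat (fun n => F (ncons i n))). intros; apply H.
Qed.

End MsumAn.


Lemma csum_mult_r (c : C) (f : nat -> C) n : csum (fun i => f i * c) n = csum f n * c.
Proof. rewrite <- (Cmult_comm c), <- csum_mult_l. apply csum_ext. intros; ring. Qed.

Lemma nsize0 d : nsize d (fun _ => 0%nat) = 0%nat.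
Proof. induction d. reflexivity. rewrite nsize_S, IHd. reflexivity. Qed.

Section Ident.
Variables (d : nat) (x0 : R) (p u0 : R -> C) (r : nat -> R -> C) (lam : nat -> C).
Variables a b : R.
Hypothesis Hd : (1 <= d)%nat.
Hypothesis Hab : (a < b)%R.
Hypothesis H0 : (a <= x0 <= b)%R.
Hypothesis Hp : cont_on a b p.
Hypothesis Hu0 : cont_on a b u0.
Hypothesis Hr : forall i, (i < d)%nat -> cont_on a b (r i).
Hypothesis Hp0 : forall x, (a <= x <= b)%R -> p x <> 0.
Hypothesis Hu00 : forall x, (a <= x <= b)%R -> u0 x <> 0.

Notation Xt := (Xt d x0 p u0 r).
Notation X := (X d x0 p u0 r).
Notation I x := (a <= x <= b)%R.

Definition T1 (n : nat -> nat) (x : R) : C := Xt (twice n) x * mpow d lam n / cfact (2 * nsize d n).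
Definition U1 (n : nat -> nat) (x : R) : C := if Nat.eqb (nsize d n) 0 then 0 else
  csum (fun i => Xt (zsub (twice n) (zdelta i)) x) d * mpow d lam n / cfact (2 * nsize d n - 1).
Definition T2 (n : nat -> nat) (x : R) : C := X (twice n) x * mpow d lam n / cfact (2 * nsize d n + 1).
Definition U2 (n : nat -> nat) (x : R) : C := csum (fun i => X (zsub (twice n) (zdelta i)) x) d * mpow d lam n / cfact (2 * nsize d n).
Definition coefA (s : R) : C := / (p s * u0 s * u0 s).
Definition rhoF (s : R) : C := csum (fun i => lam i * r i s) d.
Definition coefB (s : R) : C := u0 s * u0 s * rhoF s.

Lemma cont_co : cont_on a b coefA.
Proof. apply (cont_coef p u0 a b); auto. Qed.

Lemma cont_rho : cont_on a b rhoF.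
Proof. apply (cont_csum a b (fun i s => lam i * r i s)). intros. apply cont_mult; auto. apply cont_const. Qed.

Lemma cont_bco : cont_on a b coefB.
Proof. apply cont_mult. apply cont_mult; auto. apply cont_rho. Qed.

Lemma cont_T1 n : cont_on a b (T1 n).
Proof. unfold T1, Cdiv. apply cont_mult. apply cont_mult. apply (cont_Xt d x0 p u0 r a b); auto. apply cont_const. apply cont_const. Qed.
Lemma cont_T2 n : cont_on a b (T2 n).
Proof. unfold T2, Cdiv. apply cont_mult. apply cont_mult. apply (cont_X d x0 p u0 r a b); auto. apply cont_const. apply cont_const. Qed.
Lemma cont_U1 n : cont_on a b (U1 n).
Proof.
unfold U1, Cdiv. destruct (Nat.eqb (nsize d n) 0). apply cont_const.
apply cont_mult. apply cont_mult. apply (cont_csum a b (fun i x => Xt (zsub (twice n) (zdelta i)) x)).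
intros; apply (cont_Xt d x0 p u0 r a b); auto. apply cont_const. apply cont_const.
Qed.
Lemma cont_U2 n : cont_on a b (U2 n).
Proof.
unfold U2, Cdiv.
apply cont_mult. apply cont_mult. apply (cont_csum a b (fun i x => X (zsub (twice n) (zdelta i)) x)).
intros; apply (cont_X d x0 p u0 r a b); auto. apply cont_const. apply cont_const.
Qed.

Lemma cfact0 : cfact 0 = 1.
Proof. reflexivity. Qed.

Lemma T1_term n x : I x ->
  T1 n x = (if Nat.eqb (nsize d n) 0 then 1 else 0) + cint x0 (fun s => coefA s * U1 n s) x.
Proof.
intros Hx. unfold T1. destruct (Nat.eqb_spec (nsize d n) 0) as [Hn|Hn].
- rewrite XtA0, mpow_zero, Hn by auto.
  rewrite (cint_ext a b x0 (fun s => coefA s * U1 n s) (fun _ => 0)); auto.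
  2:{ intros. unfold U1. rewrite Hn. simpl. ring. }
  rewrite cint_zero. replace (2 * 0)%nat with 0%nat by lia. rewrite cfact0. field.
- rewrite XtA by auto.
  assert (Hn' : Nat.eqb (nsize d n) 0 = false) by (apply Nat.eqb_neq; auto).
  rewrite (cint_ext a b x0 (fun s => coefA s * U1 n s) (fun s => (mpow d lam n / cfact (2 * nsize d n - 1)) *
      (/ (p s * u0 s * u0 s) * csum (fun i => Xt (zsub (twice n) (zdelta i)) s) d))); auto.
  2:{ intros. unfold coefA, U1. rewrite Hn'. unfold Cdiv. ring. }
  rewrite (cint_Cmult a b Hab); auto.
  2:{ apply cont_mult. apply cont_co. apply (cont_csum a b (fun i x => Xt (zsub (twice n) (zdelta i)) x)).
      intros; apply (cont_Xt d x0 p u0 r a b); auto. }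
  set (m := nsize d n) in *.
  replace (2 * Z.of_nat m)%Z with (Z.of_nat (2 * m)) by lia.
  assert (HF := zC_fact (2 * m) ltac:(lia)).
  set (J := cint x0 _ x).
  transitivity (zC (Z.of_nat (2 * m)) / cfact (2 * m) * mpow d lam n * J).
  unfold Cdiv; ring. rewrite HF. unfold Cdiv; ring.
Qed.

Lemma S1R1 N x : I x ->
  msum_le d N (fun n => T1 n x) = 1 + cint x0 (fun s => coefA s * msum_le d N (fun n => U1 n s)) x.
Proof.
intros Hx.
rewrite (msum_ext d N _ (fun n => (if Nat.eqb (nsize d n) 0 then 1 else 0) + cint x0 (fun s => coefA s * U1 n s) x)).
2:{ intros n. apply T1_term; auto. }
rewrite msum_plus. rewrite msum_only0.
2:{ intros n Hn. apply Nat.eqb_neq in Hn. rewrite Hn. reflexivity. }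
rewrite nsize0. simpl Nat.eqb.
rewrite <- cint_msum with (a := a) (b := b); auto.
2:{ intros n. apply cont_mult. apply cont_co. apply cont_U1. }
f_equal. apply cint_ext with (a := a) (b := b); auto. intros s Hs.
rewrite <- msum_mult_l. reflexivity.
Qed.


Lemma bco_reindex (T : (nat -> nat) -> R -> C) N s :
  coefB s * msum_le d N (fun n => T n s) =
  msum_le d (S N) (fun n => csum (fun i => if Nat.leb 1 (n i) then lam i * r i s * u0 s * u0 s * T (dec i n) s else 0) d).
Proof.
rewrite msum_csum.
rewrite (csum_ext _ (fun i => lam i * r i s * u0 s * u0 s * msum_le d N (fun n => T n s))).
- rewrite csum_mult_r. unfold coefB, rhoF. rewrite <- (csum_mult_l (u0 s * u0 s) (fun i => lam i * r i s)).
  f_equal. apply csum_ext. intros; ring.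
- intros i Hi. rewrite <- (msum_reindex d i N (fun n => T n s)) by auto.
  rewrite <- msum_mult_l. apply msum_ext. intros n. destruct (Nat.leb 1 (n i)); ring.
Qed.

Lemma cont_G (T : (nat -> nat) -> R -> C) n : (forall m, cont_on a b (T m)) ->
  cont_on a b (fun s => csum (fun i => if Nat.leb 1 (n i) then lam i * r i s * u0 s * u0 s * T (dec i n) s else 0) d).
Proof.
intros HT. apply (cont_csum a b (fun i s => if Nat.leb 1 (n i) then lam i * r i s * u0 s * u0 s * T (dec i n) s else 0)).
intros i Hi. destruct (Nat.leb 1 (n i)); [|apply cont_const].
apply cont_mult; auto. apply cont_mult; auto. apply cont_mult; auto. apply cont_mult; auto. apply cont_const.
Qed.

Lemma U1_term n x : I x ->
  U1 n x = cint x0 (fun s => csum (fun i => if Nat.leb 1 (n i) then lam i * r i s * u0 s * u0 s * T1 (dec i n) s else 0) d) x.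
Proof.
intros Hx. unfold U1. destruct (Nat.eqb_spec (nsize d n) 0) as [Hn|Hn].
- rewrite (cint_ext a b x0 _ (fun _ => 0)); auto. rewrite cint_zero. reflexivity.
  intros s Hs. rewrite (csum_ext _ (fun _ => 0)). apply csum_zero. intros i Hi.
  rewrite (nsize_zero d n Hn i Hi). reflexivity.
- rewrite (cint_csum a b Hab x0 (fun i s => if Nat.leb 1 (n i) then lam i * r i s * u0 s * u0 s * T1 (dec i n) s else 0)); auto.
  2:{ intros i Hi. destruct (Nat.leb 1 (n i)); [|apply cont_const].
      apply cont_mult; auto. apply cont_mult; auto. apply cont_mult; auto. apply cont_mult; auto. apply cont_const.
      apply cont_T1. }
  unfold Cdiv. rewrite <- Cmult_assoc. rewrite <- csum_mult_r. apply csum_ext. intros i Hi.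
  destruct (Nat.leb_spec 1 (n i)) as [Hni|Hni].
  + rewrite XtB by auto.
    assert (Hge := nsize_ge d n i Hi).
    rewrite (cint_ext a b x0 (fun s => if true then lam i * r i s * u0 s * u0 s * T1 (dec i n) s else 0)
       (fun s => (lam i * mpow d lam (dec i n) / cfact (2 * (nsize d n - 1))) *
        (r i s * u0 s * u0 s * Xt (twice (dec i n)) s))); auto.
    2:{ intros s Hs. cbv beta iota. unfold T1. rewrite nsize_dec by auto. unfold Cdiv. ring. }
    rewrite (cint_Cmult a b Hab); auto.
    2:{ apply cont_mult. apply cont_mult. apply cont_mult; auto. auto. apply (cont_Xt d x0 p u0 r a b); auto. }
    rewrite <- mpow_dec by auto.
    set (m := nsize d n) in *.
    replace (2 * Z.of_nat m - 1)%Z with (Z.of_nat (2 * m - 1)) by lia.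
    assert (HF := zC_fact (2 * m - 1) ltac:(lia)).
    replace (2 * m - 1 - 1)%nat with (2 * (m - 1))%nat in HF by lia.
    set (J := cint x0 _ x).
    transitivity (zC (Z.of_nat (2 * m - 1)) / cfact (2 * m - 1) * mpow d lam n * J).
    unfold Cdiv; ring. rewrite HF. unfold Cdiv; ring.
  + replace (n i) with 0%nat by lia. rewrite XtB0 by (auto; lia). rewrite cint_zero. ring.
Qed.

Lemma S1R2 N x : I x ->
  msum_le d (S N) (fun n => U1 n x) = 0 + cint x0 (fun s => coefB s * msum_le d N (fun n => T1 n s)) x.
Proof.
intros Hx. rewrite Cplus_0_l.
rewrite (cint_ext a b x0 _ (fun s => msum_le d (S N) (fun n => csum (fun i => if Nat.leb 1 (n i) then lam i * r i s * u0 s * u0 s * T1 (dec i n) s else 0) d))); auto.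
2:{ intros. apply bco_reindex. }
rewrite cint_msum with (a := a) (b := b); auto.
2:{ intros n. apply cont_G. apply cont_T1. }
apply msum_ext. intros n. apply U1_term; auto.
Qed.

Lemma S2R1 N x : I x ->
  msum_le d N (fun n => T2 n x) = 0 + cint x0 (fun s => coefA s * msum_le d N (fun n => U2 n s)) x.
Proof.
intros Hx. rewrite Cplus_0_l.
rewrite (cint_ext a b x0 _ (fun s => msum_le d N (fun n => coefA s * U2 n s))); auto.
2:{ intros. rewrite msum_mult_l. reflexivity. }
rewrite cint_msum with (a := a) (b := b); auto.
2:{ intros n. apply cont_mult. apply cont_co. apply cont_U2. }
apply msum_ext. intros n. unfold T2. rewrite XA.
rewrite (cint_ext a b x0 (fun s => coefA s * U2 n s) (fun s => (mpow d lam n / cfact (2 * nsize d n)) *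
      (/ (p s * u0 s * u0 s) * csum (fun i => X (zsub (twice n) (zdelta i)) s) d))); auto.
2:{ intros. unfold coefA, U2. unfold Cdiv. ring. }
rewrite (cint_Cmult a b Hab); auto.
2:{ apply cont_mult. apply cont_co. apply (cont_csum a b (fun i x => X (zsub (twice n) (zdelta i)) x)).
    intros; apply (cont_X d x0 p u0 r a b); auto. }
set (m := nsize d n) in *.
replace (2 * Z.of_nat m + 1)%Z with (Z.of_nat (2 * m + 1)) by lia.
assert (HF := zC_fact (2 * m + 1) ltac:(lia)).
replace (2 * m + 1 - 1)%nat with (2 * m)%nat in HF by lia.
set (J := cint x0 _ x).
transitivity (zC (Z.of_nat (2 * m + 1)) / cfact (2 * m + 1) * mpow d lam n * J).
unfold Cdiv; ring. rewrite HF. unfold Cdiv; ring.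
Qed.

Lemma U2_term n x : I x ->
  U2 n x = (if Nat.eqb (nsize d n) 0 then 1 else 0) +
    cint x0 (fun s => csum (fun i => if Nat.leb 1 (n i) then lam i * r i s * u0 s * u0 s * T2 (dec i n) s else 0) d) x.
Proof.
intros Hx. unfold U2. destruct (Nat.eqb_spec (nsize d n) 0) as [Hn|Hn].
- rewrite (cint_ext a b x0 _ (fun _ => 0)); auto. rewrite cint_zero.
  2:{ intros s Hs. rewrite (csum_ext _ (fun _ => 0)). apply csum_zero. intros i Hi.
      rewrite (nsize_zero d n Hn i Hi). reflexivity. }
  rewrite (csum_ext _ (fun _ => / RtoC (INR d))).
  2:{ intros i Hi. rewrite XB0 by auto. reflexivity. }
  rewrite csum_const, mpow_zero, Hn by auto. replace (2 * 0)%nat with 0%nat by lia. rewrite cfact0.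
  assert (HdC : RtoC (INR d) <> 0) by (apply RtoC_nz, not_0_INR; lia). field. auto.
- rewrite (cint_csum a b Hab x0 (fun i s => if Nat.leb 1 (n i) then lam i * r i s * u0 s * u0 s * T2 (dec i n) s else 0)); auto.
  2:{ intros i Hi. destruct (Nat.leb 1 (n i)); [|apply cont_const].
      apply cont_mult; auto. apply cont_mult; auto. apply cont_mult; auto. apply cont_mult; auto. apply cont_const.
      apply cont_T2. }
  rewrite Cplus_0_l.
  unfold Cdiv. rewrite <- Cmult_assoc. rewrite <- csum_mult_r. apply csum_ext. intros i Hi.
  destruct (Nat.leb_spec 1 (n i)) as [Hni|Hni].
  + rewrite XB by auto.
    assert (Hge := nsize_ge d n i Hi).
    rewrite (cint_ext a b x0 (fun s => if true then lam i * r i s * u0 s * u0 s * T2 (dec i n) s else 0)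
       (fun s => (lam i * mpow d lam (dec i n) / cfact (2 * (nsize d n - 1) + 1)) *
        (r i s * u0 s * u0 s * X (twice (dec i n)) s))); auto.
    2:{ intros s Hs. cbv beta iota. unfold T2. rewrite nsize_dec by auto. unfold Cdiv. ring. }
    rewrite (cint_Cmult a b Hab); auto.
    2:{ apply cont_mult. apply cont_mult. apply cont_mult; auto. auto. apply (cont_X d x0 p u0 r a b); auto. }
    rewrite <- mpow_dec by auto.
    set (m := nsize d n) in *.
    replace (2 * Z.of_nat m)%Z with (Z.of_nat (2 * m)) by lia.
    assert (HF := zC_fact (2 * m) ltac:(lia)).
    replace (2 * m - 1)%nat with (2 * (m - 1) + 1)%nat in HF by lia.
    set (J := cint x0 _ x).
    transitivity (zC (Z.of_nat (2 * m)) / cfact (2 * m) * mpow d lam n * J).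
    unfold Cdiv; ring. rewrite HF. unfold Cdiv; ring.
  + replace (n i) with 0%nat by lia. rewrite XB1 by (auto; lia). rewrite cint_zero. ring.
Qed.

Lemma S2R2 N x : I x ->
  msum_le d (S N) (fun n => U2 n x) = 1 + cint x0 (fun s => coefB s * msum_le d N (fun n => T2 n s)) x.
Proof.
intros Hx.
rewrite (cint_ext a b x0 _ (fun s => msum_le d (S N) (fun n => csum (fun i => if Nat.leb 1 (n i) then lam i * r i s * u0 s * u0 s * T2 (dec i n) s else 0) d))); auto.
2:{ intros. apply bco_reindex. }
rewrite cint_msum with (a := a) (b := b); auto.
2:{ intros n. apply cont_G. apply cont_T2. }
rewrite (msum_ext d (S N) _ (fun n => (if Nat.eqb (nsize d n) 0 then 1 else 0) +
    cint x0 (fun s => csum (fun i => if Nat.leb 1 (n i) then lam i * r i s * u0 s * u0 s * T2 (dec i n) s else 0) d) x)).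
2:{ intros n. apply U2_term; auto. }
rewrite msum_plus. rewrite msum_only0.
2:{ intros n Hn. apply Nat.eqb_neq in Hn. rewrite Hn. reflexivity. }
rewrite nsize0. reflexivity.
Qed.

End Ident.


Lemma deriv_unique a b f f1 f2 x : (a < b)%R -> (a <= x <= b)%R ->
  has_deriv_on a b f f1 -> has_deriv_on a b f f2 -> f1 x = f2 x.
Proof.
intros Hab Hx H1 H2.
destruct (Ceq_dec (f1 x) (f2 x)) as [E|E]; auto. exfalso.
assert (He : (0 < Cmod (f1 x - f2 x))%R).
{ apply (proj1 (Cmod_gt_0 _)). intros E'. apply E. replace (f1 x) with (f1 x - f2 x + f2 x) by ring. rewrite E'. ring. }
set (eps := (Cmod (f1 x - f2 x) / 2)%R).
destruct (proj1 (lim_within _ _ _ _) (H1 x Hx) eps ltac:(unfold eps; lra)) as [d1 [Hd1 K1]].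
destruct (proj1 (lim_within _ _ _ _) (H2 x Hx) eps ltac:(unfold eps; lra)) as [d2 [Hd2 K2]].
set (del := Rmin d1 d2).
assert (Hdel : (0 < del)%R) by (apply Rmin_pos; auto).
assert (Hy : exists y, (a <= y <= b)%R /\ y <> x /\ (Rabs (y - x) < del)%R).
{ destruct (Rlt_dec x b) as [Hxb|Hxb].
  - exists (x + Rmin (del / 2) ((b - x) / 2))%R.
    assert (0 < Rmin (del / 2) ((b - x) / 2))%R by (apply Rmin_pos; lra).
    assert (Rmin (del / 2) ((b - x) / 2) <= del / 2)%R by apply Rmin_l.
    assert (Rmin (del / 2) ((b - x) / 2) <= (b - x) / 2)%R by apply Rmin_r.
    split; [lra|]. split; [lra|]. rewrite Rabs_right; lra.
  - exists (x - Rmin (del / 2) ((b - a) / 2))%R.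
    assert (0 < Rmin (del / 2) ((b - a) / 2))%R by (apply Rmin_pos; lra).
    assert (Rmin (del / 2) ((b - a) / 2) <= del / 2)%R by apply Rmin_l.
    assert (Rmin (del / 2) ((b - a) / 2) <= (b - a) / 2)%R by apply Rmin_r.
    split; [lra|]. split; [lra|]. rewrite Rabs_left; lra. }
destruct Hy as [y [Hy1 [Hy2 Hy3]]].
specialize (K1 y (conj Hy1 Hy2) ltac:(eapply Rlt_le_trans; [exact Hy3|apply Rmin_l])).
specialize (K2 y (conj Hy1 Hy2) ltac:(eapply Rlt_le_trans; [exact Hy3|apply Rmin_r])).
set (Q := (f y - f x) / RtoC (y - x)) in *.
assert (Htr := Cmod_triangle (f1 x - Q) (Q - f2 x)).
replace (f1 x - Q + (Q - f2 x)) with (f1 x - f2 x) in Htr by ring.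
rewrite Cmod_minus_sym in K1. unfold eps in *. lra.
Qed.

Lemma deriv_int a b x0 (c : C) (A V W : R -> C) : (a < b)%R -> (a <= x0 <= b)%R ->
  cont_on a b (fun s => A s * V s) ->
  (forall x, (a <= x <= b)%R -> W x = c + cint x0 (fun s => A s * V s) x) ->
  has_deriv_on a b W (fun x => A x * V x).
Proof.
intros Hab H0 HAV HW.
apply (deriv_ext a b (fun x => c + cint x0 (fun s => A s * V s) x) W (fun x => 0 + A x * V x)).
- intros; symmetry; auto.
- intros; ring.
- apply (deriv_plus a b (fun _ => c) (cint x0 (fun s => A s * V s))).
  apply deriv_const. apply deriv_cint; auto.
Qed.

Theorem mainTheorem1
  (d : nat) (x1 x2 x0 : R) (p dp q : R -> C) (r : nat -> R -> C)
  (u0 du0 : R -> C) :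
  (1 <= d)%nat -> (x1 < x2)%R -> (x1 <= x0 <= x2)%R ->
  cont_on x1 x2 p -> cont_on x1 x2 q ->
  (forall i, (i < d)%nat -> cont_on x1 x2 (r i)) ->
  has_deriv_on x1 x2 p dp -> cont_on x1 x2 dp ->
  (forall x, (x1 <= x <= x2)%R -> p x <> 0) ->
  (* u0 is a nonvanishing solution of (p u0')' + q u0 = 0, u0' = du0 *)
  has_deriv_on x1 x2 u0 du0 ->
  has_deriv_on x1 x2 (fun x => p x * du0 x) (fun x => - (q x * u0 x)) ->
  (forall x, (x1 <= x <= x2)%R -> u0 x <> 0) ->
  forall lam : nat -> C,
  let Xt := Xt d x0 p u0 r in
  let X := X d x0 p u0 r in
  (* partial sums over the multi-indices n with |n| <= N *)
  let S1 := fun N x => msum_le d N (fun n =>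
              Xt (twice n) x * mpow d lam n / cfact (2 * nsize d n)) in
  let S2 := fun N x => msum_le d N (fun n =>
              X (twice n) x * mpow d lam n / cfact (2 * nsize d n + 1)) in
  let SD1 := fun N x => msum_le d N (fun n =>
              if Nat.eqb (nsize d n) 0 then 0 else
              csum (fun i => Xt (zsub (twice n) (zdelta i)) x) d * mpow d lam n
                / cfact (2 * nsize d n - 1)) in
  let SD2 := fun N x => msum_le d N (fun n =>
              csum (fun i => X (zsub (twice n) (zdelta i)) x) d * mpow d lam n
                / cfact (2 * nsize d n)) in
  let rho := fun x => csum (fun i => lam i * r i x) d in
  exists W1 W2 V1 V2 : R -> C,
    unif_cv_on x1 x2 S1 W1 /\ unif_cv_on x1 x2 S2 W2 /\
    unif_cv_on x1 x2 SD1 V1 /\ unif_cv_on x1 x2 SD2 V2 /\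
    let u1 := fun x => u0 x * W1 x in
    let u2 := fun x => u0 x * W2 x in
    let du1 := fun x => du0 x / u0 x * u1 x + / (p x * u0 x) * V1 x in
    let du2 := fun x => du0 x / u0 x * u2 x + / (p x * u0 x) * V2 x in
    (* u1, u2 solve (p y')' + q y = (lam_1 r_1 + ... + lam_d r_d) y *)
    has_deriv_on x1 x2 u1 du1 /\
    has_deriv_on x1 x2 (fun x => p x * du1 x) (fun x => rho x * u1 x - q x * u1 x) /\
    has_deriv_on x1 x2 u2 du2 /\
    has_deriv_on x1 x2 (fun x => p x * du2 x) (fun x => rho x * u2 x - q x * u2 x) /\
    (* linear independence on [x1,x2] *)
    (forall a b : C, (forall x, (x1 <= x <= x2)%R -> a * u1 x + b * u2 x = 0) ->
       a = 0 /\ b = 0) /\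
    (* initial values *)
    u1 x0 = u0 x0 /\ du1 x0 = du0 x0 /\
    u2 x0 = 0 /\ du2 x0 = / (p x0 * u0 x0).
Proof.
intros Hd Hab H0 Hp Hq Hr Hdp Hdpc Hp0 Hdu0 Hpdu0 Hu00 lam.
intros Xt' X' S1 S2 SD1 SD2 rho'.
assert (Hu0 : cont_on x1 x2 u0) by (apply (deriv_cont x1 x2 u0 du0); auto).
set (co := coefA p u0). set (bco := coefB d u0 r lam).
destruct (picard x1 x2 Hab x0 co bco 1 0 S1 SD1) as [W1 [V1 [HW1 [HV1 [HW1c [HV1c [HW1e HV1e]]]]]]]; auto.
{ apply cont_co; auto. }
{ apply cont_bco; auto. }
{ intros N. apply (cont_msum x1 x2 d N (T1 d x0 p u0 r lam)). intros n. apply cont_T1; auto. }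
{ intros N. apply (cont_msum x1 x2 d N (U1 d x0 p u0 r lam)). intros n. apply cont_U1; auto. }
{ intros N x Hx. apply (S1R1 d x0 p u0 r lam x1 x2); auto. }
{ intros N x Hx. apply (S1R2 d x0 p u0 r lam x1 x2); auto. }
destruct (picard x1 x2 Hab x0 co bco 0 1 S2 SD2) as [W2 [V2 [HW2 [HV2 [HW2c [HV2c [HW2e HV2e]]]]]]]; auto.
{ apply cont_co; auto. }
{ apply cont_bco; auto. }
{ intros N. apply (cont_msum x1 x2 d N (T2 d x0 p u0 r lam)). intros n. apply cont_T2; auto. }
{ intros N. apply (cont_msum x1 x2 d N (U2 d x0 p u0 r lam)). intros n. apply cont_U2; auto. }
{ intros N x Hx. apply (S2R1 d x0 p u0 r lam x1 x2); auto. }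
{ intros N x Hx. apply (S2R2 d x0 p u0 r lam x1 x2); auto. }
assert (Hco : cont_on x1 x2 co) by (apply cont_co; auto).
assert (Hbco : cont_on x1 x2 bco) by (apply cont_bco; auto).
assert (HW1d : has_deriv_on x1 x2 W1 (fun x => co x * V1 x)) by (apply (deriv_int x1 x2 x0 1); auto; apply cont_mult; auto).
assert (HV1d : has_deriv_on x1 x2 V1 (fun x => bco x * W1 x)) by (apply (deriv_int x1 x2 x0 0); auto; apply cont_mult; auto).
assert (HW2d : has_deriv_on x1 x2 W2 (fun x => co x * V2 x)) by (apply (deriv_int x1 x2 x0 0); auto; apply cont_mult; auto).
assert (HV2d : has_deriv_on x1 x2 V2 (fun x => bco x * W2 x)) by (apply (deriv_int x1 x2 x0 1); auto; apply cont_mult; auto).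
assert (HW10 : W1 x0 = 1) by (rewrite HW1e, cint_point by auto; ring).
assert (HV10 : V1 x0 = 0) by (rewrite HV1e, cint_point by auto; ring).
assert (HW20 : W2 x0 = 0) by (rewrite HW2e, cint_point by auto; ring).
assert (HV20 : V2 x0 = 1) by (rewrite HV2e, cint_point by auto; ring).
assert (Hpu0 : forall x, (x1 <= x <= x2)%R -> p x * u0 x <> 0) by (intros; apply Cmult_neq_0; auto).
exists W1, W2, V1, V2.
split; [exact HW1|]. split; [exact HW2|]. split; [exact HV1|]. split; [exact HV2|].
intros u1 u2 du1 du2.
split; [|split; [|split; [|split; [|split]]]].
- apply (deriv_ext x1 x2 (fun x => u0 x * W1 x) u1 (fun x => du0 x * W1 x + u0 x * (co x * V1 x)) du1).
  + intros; reflexivity.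
  + intros x Hx. unfold du1, u1, co, coefA. field. split; auto.
  + apply deriv_mult; auto.
- apply (deriv_ext x1 x2 (fun x => p x * du0 x * W1 x + V1 x * / u0 x) (fun x => p x * du1 x)
    (fun x => (- (q x * u0 x)) * W1 x + p x * du0 x * (co x * V1 x) + (bco x * W1 x * / u0 x + V1 x * (- du0 x * / (u0 x * u0 x)))) ).
  + intros x Hx. unfold du1, u1. field; split; auto.
  + intros x Hx. unfold u1, co, bco, coefA, coefB, rhoF, rho'. field. split; auto.
  + apply deriv_plus. apply (deriv_mult x1 x2 (fun x => p x * du0 x) W1); auto.
    apply deriv_mult; auto. apply deriv_inv; auto.
- apply (deriv_ext x1 x2 (fun x => u0 x * W2 x) u2 (fun x => du0 x * W2 x + u0 x * (co x * V2 x)) du2).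
  + intros; reflexivity.
  + intros x Hx. unfold du2, u2, co, coefA. field. split; auto.
  + apply deriv_mult; auto.
- apply (deriv_ext x1 x2 (fun x => p x * du0 x * W2 x + V2 x * / u0 x) (fun x => p x * du2 x)
    (fun x => (- (q x * u0 x)) * W2 x + p x * du0 x * (co x * V2 x) + (bco x * W2 x * / u0 x + V2 x * (- du0 x * / (u0 x * u0 x)))) ).
  + intros x Hx. unfold du2, u2. field; split; auto.
  + intros x Hx. unfold u2, co, bco, coefA, coefB, rhoF, rho'. field. split; auto.
  + apply deriv_plus. apply (deriv_mult x1 x2 (fun x => p x * du0 x) W2); auto.
    apply deriv_mult; auto. apply deriv_inv; auto.
- intros al be Hlin.
  assert (E0 := Hlin x0 H0). unfold u1, u2 in E0. rewrite HW10, HW20 in E0.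
  assert (Ha : al = 0).
  { replace al with ((al * (u0 x0 * 1) + be * (u0 x0 * 0)) / u0 x0) by (field; auto).
    rewrite E0. field. auto. }
  split; auto.
  assert (Hb : forall x, (x1 <= x <= x2)%R -> be * W2 x = 0).
  { intros x Hx. specialize (Hlin x Hx). unfold u1, u2 in Hlin. rewrite Ha in Hlin.
    replace (be * W2 x) with ((0 * (u0 x * W1 x) + be * (u0 x * W2 x)) / u0 x) by (field; auto).
    rewrite Hlin. field. auto. }
  assert (D1 : has_deriv_on x1 x2 (fun x => be * W2 x) (fun x => 0 * W2 x + be * (co x * V2 x))).
  { apply (deriv_mult x1 x2 (fun _ => be) W2). apply deriv_const. auto. }
  assert (D2 : has_deriv_on x1 x2 (fun x => be * W2 x) (fun _ => 0)).
  { apply (deriv_ext x1 x2 (fun _ => 0) _ (fun _ => 0)); auto. intros; symmetry; auto. apply deriv_const. }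
  assert (U := deriv_unique x1 x2 _ _ _ x0 Hab H0 D1 D2). simpl in U.
  rewrite HV20 in U. unfold co, coefA in U.
  assert (Hz : p x0 * u0 x0 * u0 x0 <> 0) by (apply Cmult_neq_0; auto).
  replace be with ((0 * W2 x0 + be * (/ (p x0 * u0 x0 * u0 x0) * 1)) * (p x0 * u0 x0 * u0 x0)) by (field; auto).
  rewrite U. ring.
- unfold du1, u1, du2, u2. rewrite HW10, HV10, HW20, HV20.
  split; [ring|]. split; [field; split; auto|]. split; [ring|]. field. split; auto.
Qed.
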